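(* Let $l_1,u_1,l_2,u_2$ be non-negative integers and $(f(k))$, $(g(k))$ complex sequences such that the polynomial identity \[ \sum_{k=l_1}^{u_1}f(k)(1-t)^k=\sum_{k=l_2}^{u_2}g(k)t^k \] holds for all complex $t$. Let $r,s\in\mathbb{C}\setminus\mathbb{Z}^{-}$ with $s\neq0$ and $r-s\notin\mathbb{Z}^{-}$. Then \[ \sum_{k=l_1}^{u_1}f(k)\frac{1}{\binom{k+r}{s}}=\sum_{k=l_2}^{u_2}g(k)\frac{s}{r-s+1}\frac{1}{\binom{k+r}{r-s+1}}, \] and \[ \sum_{k=l_1}^{u_1}f(k)\frac{H_s-H_{k+r-s}}{\binom{k+r}{s}}=\sum_{k=l_2}^{u_2}g(k)\frac{r+1}{(r-s+1)^2}\frac{1}{\binom{k+r}{r-s+1}}+\sum_{k=l_2}^{u_2}g(k)\frac{s}{r-s+1}\frac{H_{k+s-1}-H_{r-s+1}}{\binom{k+r}{r-s+1}}. \]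
   Context: $\mathbb{Z}^{-}$ denotes the set of negative integers. For complex $z$ not a negative integer, $H_z=\psi(z+1)+\gamma$ ($\psi$ the digamma function, $\gamma$ Euler's constant). Binomial coefficients with complex entries: $\binom{x}{y}=\frac{\Gamma(x+1)}{\Gamma(y+1)\Gamma(x-y+1)}$. *)

(* Defs.v *)
From Stdlib Require Import Reals ClassicalEpsilon Factorial List.
From Coquelicot Require Import Coquelicot.

Open Scope C_scope.

Definition cexp (z : C) : C :=
  (exp (Re z) * cos (Im z), exp (Re z) * sin (Im z))%R.

Definition nat_cpow (n : nat) (z : C) : C := cexp (z * RtoC (ln (INR n))).

(* Gauss' product for Gamma:  Gamma z = lim_n  n! n^z / (z (z+1) ... (z+n)). *)
Definition gauss_seq (z : C) (n : nat) : C :=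
  RtoC (INR (fact n)) * nat_cpow n z
  / fold_right Cmult (RtoC 1) (map (fun j => z + RtoC (INR j)) (List.seq 0 (S n))).

(* Complex Gamma function (meaningful off the poles 0, -1, -2, ...). *)
Definition CGamma (z : C) : C :=
  epsilon (inhabits (RtoC 0))
    (fun l : C => filterlim (gauss_seq z) eventually (locally l)).

Definition CGamma' (z : C) : C :=
  epsilon (inhabits (RtoC 0))
    (fun l : C => is_derive (K := C_AbsRing) (V := C_NormedModule) CGamma z l).

Definition digamma (z : C) : C := CGamma' z / CGamma z.

Definition euler_gamma : R :=
  real (Lim_seq (fun n => (sum_n_m (fun k => / INR k) 1 n - ln (INR n))%R)).

Definition Harm (z : C) : C := digamma (z + RtoC 1) + RtoC euler_gamma.

Definition Cbinom (x y : C) : C :=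
  CGamma (x + RtoC 1) / (CGamma (y + RtoC 1) * CGamma (x - y + RtoC 1)).

Definition is_negint (z : C) : Prop := exists m : nat, z = RtoC (- INR (S m))%R.

(* Main.v *)
Require Import Defs.
From Stdlib Require Import Reals Lra Lia Psatz List ClassicalEpsilon.
From Coquelicot Require Import Coquelicot.
Open Scope C_scope.

Open Scope C_scope.

Definition hd (f : C -> C) (z L : C) : Prop :=
  forall eps : R, (0 < eps)%R -> exists eta : R, (0 < eta)%R /\
    forall w, (Cmod (w - z) < eta)%R ->
      (Cmod (f w - f z - L * (w - z)) <= eps * Cmod (w - z))%R.

Lemma hd_is_derive f z L : hd f z L -> is_derive (K := C_AbsRing) (V := C_NormedModule) f z L.
Proof.
  intros H. split.
  - apply is_linear_scal_l.
  - intros x Hx.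
    apply (is_filter_lim_locally_unique (K:=C_AbsRing) (V:=AbsRing_NormedModule C_AbsRing)) in Hx. subst x.
    intros eps. destruct (H eps (cond_pos eps)) as [eta [Heta Hw]].
    exists (mkposreal _ Heta). intros y Hy.
    change (Cmod (y - z) < eta)%R in Hy.
    specialize (Hw y Hy). 
    change (Cmod (f y - f z - (y - z) * L) <= eps * Cmod (y - z))%R.
    rewrite (Cmult_comm (y - z)). exact Hw.
Qed.

Open Scope R_scope.

Lemma sin_est (b : R) : 0 <= b <= 1/2 -> b - b^3/6 <= sin b <= b.
Proof.
  intros Hb. assert (HP := PI2_1).
  destruct (sin_bound b 0 ltac:(lra) ltac:(lra)) as [H1 H2].
  assert (E1 : sin_approx b (2*0+1) = b - b^3/6) by (unfold sin_approx, sin_term; simpl; field).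
  assert (E2 : sin_approx b (2*(0+1)) = b - b^3/6 + b^5/120) by (unfold sin_approx, sin_term; simpl; field).
  rewrite E1 in H1. rewrite E2 in H2.
  assert (0 <= b^3) by (apply pow_le; lra). assert (b^5 = b^3*b^2) by ring. assert (b^2 <= 1) by nra. split; nra.
Qed.

Lemma sin_abs (b : R) : Rabs b <= 1/2 -> Rabs (sin b) <= Rabs b /\ Rabs (sin b - b) <= b^2.
Proof.
  intros Hb. destruct (Rle_or_lt 0 b) as [H|H].
  - rewrite Rabs_pos_eq in Hb by lra. destruct (sin_est b ltac:(lra)).
    assert (0 <= b^3) by (apply pow_le; lra). assert (b^3 = b*b^2) by ring.
    assert (0 <= sin b) by nra.
    rewrite (Rabs_pos_eq b) by lra. rewrite (Rabs_pos_eq (sin b)) by lra.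
    rewrite (Rabs_left1 (sin b - b)) by lra. split; nra.
  - rewrite Rabs_left in Hb by lra. destruct (sin_est (-b) ltac:(lra)).
    rewrite sin_neg in *. assert (0 <= (-b)^3) by (apply pow_le; lra). assert ((-b)^3 = (-b)*b^2) by ring.
    assert (sin b <= 0) by nra.
    rewrite (Rabs_left b) by lra. rewrite (Rabs_left1 (sin b)) by lra.
    rewrite (Rabs_pos_eq (sin b - b)) by lra. split; nra.
Qed.

Lemma cos_est (b : R) : Rabs b <= 1 -> 0 <= 1 - cos b <= b^2/2.
Proof.
  intros Hb. assert (E : cos b = 1 - 2 * sin (b/2) * sin (b/2)).
  { rewrite <- cos_2a_sin. f_equal. field. }
  rewrite E.
  destruct (sin_abs (b/2)) as [H1 _]. { rewrite Rabs_div by lra. rewrite (Rabs_pos_eq 2) by lra. lra. }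
  rewrite Rabs_div in H1 by lra. rewrite (Rabs_pos_eq 2) in H1 by lra.
  assert (Rabs (sin (b/2)) * Rabs (sin (b/2)) <= Rabs b / 2 * (Rabs b / 2)).
  { apply Rmult_le_compat; auto using Rabs_pos. }
  rewrite <- Rabs_mult in H. rewrite Rabs_pos_eq in H by nra.
  assert (Rabs b * Rabs b = b^2) by (rewrite <- Rabs_mult; rewrite Rabs_pos_eq by nra; ring).
  nra.
Qed.

Lemma exp_up (a : R) : a < 1 -> exp a <= / (1 - a).
Proof.
  intros Ha. pose proof (exp_ineq1_le (-a)).
  replace (exp a) with (/ exp (-a)) by (rewrite exp_Ropp; field; apply Rgt_not_eq, exp_pos).
  apply Rinv_le_contravar; lra.
Qed.

Lemma exp_est (a : R) : Rabs a <= 1/2 -> Rabs (exp a - 1 - a) <= 2 * a^2 /\ exp a <= 2.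
Proof.
  intros Ha. pose proof (exp_ineq1_le a).
  assert (Hb : -1/2 <= a <= 1/2) by (apply Rabs_le_between in Ha; lra).
  pose proof (exp_up a ltac:(lra)).
  assert (/ (1 - a) - 1 - a = a^2 / (1-a)) by (field; lra).
  assert (a^2/(1-a) <= 2 * a^2).
  { apply Rmult_le_reg_r with (1 - a). lra. unfold Rdiv. rewrite Rmult_assoc, Rinv_l by lra. nra. }
  rewrite Rabs_pos_eq by lra. split. lra.
  assert (/ (1 - a) <= 2). { apply Rmult_le_reg_r with (1-a). lra. rewrite Rinv_l by lra. lra. }
  lra.
Qed.

Open Scope C_scope.

Lemma cexp_plus a b : cexp (a + b) = cexp a * cexp b.
Proof.
  destruct a as [a1 a2], b as [b1 b2]. unfold cexp, Cmult, Cplus, Re, Im; simpl.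
  rewrite exp_plus, cos_plus, sin_plus. f_equal; ring.
Qed.

Lemma cexp_0 : cexp 0 = 1.
Proof. unfold cexp, Re, Im; apply injective_projections; simpl; rewrite ?exp_0, ?cos_0, ?sin_0; ring. Qed.

Lemma cexp_R (x : R) : cexp (RtoC x) = RtoC (exp x).
Proof. unfold cexp, Re, Im; apply injective_projections; simpl; rewrite ?cos_0, ?sin_0; ring. Qed.

Lemma Cmod_cexp z : Cmod (cexp z) = exp (Re z).
Proof.
  unfold Cmod, cexp; cbn [fst snd].
  replace ((exp (Re z) * cos (Im z)) ^ 2 + (exp (Re z) * sin (Im z)) ^ 2)%R with (exp (Re z) ^ 2)%R.
  - apply sqrt_pow2. left; apply exp_pos.
  - transitivity (exp (Re z) ^ 2 * (sin (Im z) ^ 2 + cos (Im z) ^ 2))%R.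
    + pose proof (sin2_cos2 (Im z)). unfold Rsqr in H.
      replace (sin (Im z) ^ 2 + cos (Im z) ^ 2)%R with 1%R by (rewrite <- H; ring). ring.
    + ring.
Qed.

Lemma cexp_neq0 z : cexp z <> 0.
Proof. intros H. pose proof (Cmod_cexp z). rewrite H, Cmod_0 in H0. pose proof (exp_pos (Re z)). lra. Qed.

Lemma Cmod_le_sum (z : C) : (Cmod z <= Rabs (fst z) + Rabs (snd z))%R.
Proof.
  pose proof (Cmod2_alt z). pose proof (Cmod_ge_0 z).
  pose proof (Rabs_pos (Re z)). pose proof (Rabs_pos (Im z)).
  rewrite <- (pow2_abs (Re z)), <- (pow2_abs (Im z)) in H. unfold Re, Im in *. nra.
Qed.

Lemma Cmod_re_im (z : C) : (Rabs (fst z) <= Cmod z /\ Rabs (snd z) <= Cmod z)%R.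
Proof.
  pose proof (Cmod2_alt z). pose proof (Cmod_ge_0 z).
  pose proof (Rabs_pos (Re z)). pose proof (Rabs_pos (Im z)).
  rewrite <- (pow2_abs (Re z)), <- (pow2_abs (Im z)) in H. unfold Re, Im in *. split; nra.
Qed.

Definition Rm (u : C) : C := cexp u - 1 - u.

Lemma Rm_bound u : (Cmod u <= 1/2)%R -> (Cmod (Rm u) <= 3 * Cmod u ^ 2)%R.
Proof.
  intros Hu. destruct (Cmod_re_im u) as [Ha Hb]. pose proof (Cmod2_alt u).
  destruct u as [a b]. unfold Re, Im in *; simpl in *.
  eapply Rle_trans; [apply Cmod_le_sum|].
  replace (fst (Rm (a, b))) with (exp a * (cos b - 1) + (exp a - 1 - a))%R
    by (unfold Rm, cexp, Re, Im; simpl; ring).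
  replace (snd (Rm (a, b))) with ((exp a - 1) * sin b + (sin b - b))%R
    by (unfold Rm, cexp, Re, Im; simpl; ring).
  destruct (exp_est a ltac:(lra)) as [E1 E2].
  destruct (sin_abs b ltac:(lra)) as [S1 S2].
  destruct (cos_est b ltac:(lra)) as [C1 C2].
  pose proof (exp_pos a).
  assert (Rabs (exp a * (cos b - 1)) <= b^2)%R.
  { rewrite Rabs_mult, Rabs_pos_eq by lra. rewrite Rabs_left1 by lra. nra. }
  assert (Rabs (exp a - 1) <= 2 * Rabs a)%R.
  { replace (exp a - 1)%R with ((exp a - 1 - a) + a)%R by ring.
    eapply Rle_trans; [apply Rabs_triang|]. rewrite <- (pow2_abs a) in E1. pose proof (Rabs_pos a). nra. }
  assert (Rabs ((exp a - 1) * sin b) <= 2 * Rabs a * Rabs b)%R.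
  { rewrite Rabs_mult. apply Rmult_le_compat; auto using Rabs_pos. }
  pose proof (Rabs_triang (exp a * (cos b - 1)) (exp a - 1 - a)).
  pose proof (Rabs_triang ((exp a - 1) * sin b) (sin b - b)).
  rewrite <- (pow2_abs a), <- (pow2_abs b) in *.
  pose proof (Rabs_pos a). pose proof (Rabs_pos b).
  assert (HH : (Cmod (a,b) * (Cmod (a,b) * 1) = Rabs a ^ 2 + Rabs b ^ 2)%R) by (rewrite !pow2_abs, H; ring).
  rewrite HH. assert (0 <= (Rabs a - Rabs b)^2)%R by apply pow2_ge_0. lra.
Qed.

Open Scope C_scope.

Lemma cexp_m1 u : (Cmod u <= 1/2)%R -> (Cmod (cexp u - 1) <= 3 * Cmod u)%R.
Proof.
  intros H. replace (cexp u - 1) with (Rm u + u) by (unfold Rm; ring).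
  eapply Rle_trans; [apply Cmod_triangle|]. pose proof (Rm_bound u H).
  pose proof (Cmod_ge_0 u). nra.
Qed.

Lemma Rm_diff u v : Rm u - Rm v = (cexp v - 1) * (cexp (u - v) - 1) + Rm (u - v).
Proof.
  unfold Rm. replace (cexp u) with (cexp v * cexp (u - v)) by (rewrite <- cexp_plus; f_equal; ring). ring.
Qed.

Lemma Rm_lip u v : (Cmod v <= 1/2)%R -> (Cmod (u - v) <= 1/2)%R ->
  (Cmod (Rm u - Rm v) <= 9 * Cmod v * Cmod (u - v) + 3 * Cmod (u - v) ^ 2)%R.
Proof.
  intros H1 H2. rewrite Rm_diff. eapply Rle_trans; [apply Cmod_triangle|].
  rewrite Cmod_mult. pose proof (cexp_m1 v H1). pose proof (cexp_m1 (u - v) H2).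
  pose proof (Rm_bound _ H2). pose proof (Cmod_ge_0 v). pose proof (Cmod_ge_0 (u - v)).
  pose proof (Cmod_ge_0 (cexp v - 1)). pose proof (Cmod_ge_0 (cexp (u - v) - 1)).
  assert (Cmod (cexp v - 1) * Cmod (cexp (u - v) - 1) <= (3 * Cmod v) * (3 * Cmod (u - v)))%R
    by (apply Rmult_le_compat; auto).
  nra.
Qed.

Definition P (n : nat) (w : C) : C :=
  fold_right Cmult (RtoC 1) (map (fun j => w + RtoC (INR j)) (List.seq 0 (S n))).

Lemma fold_mult_acc (l : list C) (a : C) : fold_right Cmult a l = fold_right Cmult 1 l * a.
Proof. induction l; simpl. ring. rewrite IHl. ring. Qed.

Lemma P_S n w : P (S n) w = P n w * (w + RtoC (INR (S n))).
Proof.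
  unfold P. rewrite (seq_S (S n) 0). rewrite map_app, fold_right_app. simpl.
  rewrite fold_mult_acc. ring.
Qed.

Lemma P_0 w : P 0 w = w + RtoC (INR 0).
Proof. unfold P. simpl. ring. Qed.

Definition Dset (w : C) : Prop := forall j : nat, w + RtoC (INR j) <> 0.

Lemma P_neq0 n w : Dset w -> P n w <> 0.
Proof.
  intros H. induction n.
  - rewrite P_0. apply H.
  - rewrite P_S. apply Cmult_neq_0. apply IHn. apply (H (S n)).
Qed.

Lemma gauss_eq w n : gauss_seq w n = RtoC (INR (Factorial.fact n)) * nat_cpow n w / P n w.
Proof. reflexivity. Qed.

Definition am (m : nat) : R := (ln (INR (S m)) - ln (INR m))%R.

Lemma cpow_S m w : nat_cpow (S m) w = nat_cpow m w * cexp (w * RtoC (am m)).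
Proof.
  unfold nat_cpow. rewrite <- cexp_plus. f_equal. unfold am.
  apply injective_projections; simpl; ring.
Qed.

Definition rho (m : nat) (w : C) : C :=
  RtoC (INR (S m)) * cexp (w * RtoC (am m)) / (w + RtoC (INR (S m))).

Lemma gauss_S w m : Dset w -> gauss_seq w (S m) = gauss_seq w m * rho m w.
Proof.
  intros H. rewrite !gauss_eq. unfold rho. rewrite P_S, cpow_S.
  change (Factorial.fact (S m)) with (S m * Factorial.fact m)%nat. rewrite mult_INR.
  pose proof (P_neq0 m w H). pose proof (H (S m)).
  rewrite RtoC_mult. field. split; auto.
Qed.

Definition sig (m : nat) (w : C) : C := rho m w - 1.
Definition cm (m : nat) : R := (/ INR m - / INR (S m))%R.

Lemma nat_large (r : R) : exists n : nat, (r <= INR n)%R.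
Proof.
  destruct (INR_archimed 1 r ltac:(lra)) as [n Hn]. exists n. lra.
Qed.

Open Scope C_scope.

Lemma ln1p_le (y : R) : (0 < 1 + y)%R -> (ln (1 + y) <= y)%R.
Proof. intros H. rewrite <- (ln_exp y) at 2. apply ln_le; [lra | apply exp_ineq1_le]. Qed.

Lemma am_bounds m : (1 <= m)%nat -> (/ INR (S m) <= am m <= / INR m)%R.
Proof.
  intros Hm. unfold am. rewrite S_INR. assert (Hx : (1 <= INR m)%R) by (apply (le_INR 1); lia).
  split.
  - assert (E : (ln (INR m) - ln (INR m + 1) = ln (1 + (- / (INR m + 1))))%R).
    { rewrite <- ln_div by lra. f_equal. field. lra. }
    pose proof (ln1p_le (- / (INR m + 1))).
    assert (0 < / (INR m + 1) < 1)%R.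
    { split. apply Rinv_0_lt_compat; lra. rewrite <- Rinv_1. apply Rinv_lt_contravar; lra. }
    lra.
  - assert (E : (ln (INR m + 1) - ln (INR m) = ln (1 + / INR m))%R).
    { rewrite <- ln_div by lra. f_equal. field. lra. }
    rewrite E. apply ln1p_le. pose proof (Rinv_0_lt_compat (INR m)). lra.
Qed.

Lemma cm_facts m : (1 <= m)%nat ->
  (0 < cm m /\ am m - / INR (S m) <= cm m /\ / INR m ^ 2 <= 2 * cm m /\ cm m <= / INR m
   /\ / INR (S m) <= 1/2)%R.
Proof.
  intros Hm. pose proof (am_bounds m Hm). unfold cm in *. rewrite S_INR in *.
  assert (Hx : (1 <= INR m)%R) by (apply (le_INR 1); lia).
  assert (E : (/ INR m - / (INR m + 1) = / (INR m * (INR m + 1)))%R) by (field; lra).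
  rewrite E. assert (0 < INR m * (INR m + 1))%R by nra.
  repeat split.
  - apply Rinv_0_lt_compat; lra.
  - lra.
  - replace (/ INR m ^ 2)%R with (/ (INR m * INR m))%R by (field; lra).
    replace (2 * / (INR m * (INR m + 1)))%R with (/ (INR m * ((INR m + 1) / 2)))%R by (field; lra).
    apply Rinv_le_contravar; nra.
  - apply Rinv_le_contravar; nra.
  - replace (1/2)%R with (/2)%R by lra. apply Rinv_le_contravar; lra.
Qed.

Lemma Cmod_div_le (X Y : C) (A B : R) : Y <> 0 -> (Cmod X <= A)%R -> (0 < B <= Cmod Y)%R ->
  (Cmod (X / Y) <= A / B)%R.
Proof.
  intros HY HX HB. rewrite Cmod_div by auto. unfold Rdiv.
  apply Rmult_le_compat; auto using Cmod_ge_0.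
  left; apply Rinv_0_lt_compat; lra.
  apply Rinv_le_contravar; lra.
Qed.

Lemma Cmod_RtoC_pos (x : R) : (0 <= x)%R -> Cmod (RtoC x) = x.
Proof. intros; rewrite Cmod_R, Rabs_pos_eq; auto. Qed.

Lemma RtoC_neq0 (x : R) : (x <> 0)%R -> RtoC x <> 0.
Proof. intros H E. apply H. injection E. auto. Qed.

Lemma sig_formula m w : (1 <= m)%nat ->
  1 + w * RtoC (/ INR (S m)) <> 0 ->
  sig m w = (Rm (w * RtoC (am m)) + w * RtoC (am m - / INR (S m))) / (1 + w * RtoC (/ INR (S m))).
Proof.
  intros Hm HD. unfold sig, rho, Rm.
  assert (HS : (INR (S m) <> 0)%R) by (apply not_0_INR; lia).
  assert (HS' : RtoC (INR (S m)) <> 0) by (apply RtoC_neq0; auto).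
  assert (Hw : w + RtoC (INR (S m)) <> 0).
  { replace (w + RtoC (INR (S m))) with (RtoC (INR (S m)) * (1 + w * RtoC (/ INR (S m)))).
    apply Cmult_neq_0; auto. rewrite RtoC_inv by auto. field. auto. }
  rewrite RtoC_minus. rewrite RtoC_inv by auto. rewrite RtoC_inv in HD by auto.
  field. repeat split; auto.
  rewrite Cplus_comm; auto.
Qed.

Open Scope C_scope.

Lemma sig_est (Rr : R) : (0 <= Rr)%R -> exists K M0, (0 <= K)%R /\ (1 <= M0)%nat /\
  forall m, (M0 <= m)%nat -> (K * cm m <= 1/2)%R /\
   forall w v, (Cmod w <= Rr)%R -> (Cmod v <= Rr)%R ->
     (Cmod (sig m w) <= K * cm m)%R /\ (Cmod (sig m w - sig m v) <= K * cm m * Cmod (w - v))%R.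
Proof.
  intros HR. set (K := (400 * (Rr + 1)^2)%R).
  destruct (nat_large (4 * Rr + 2 * K + 1)) as [M0 HM0].
  assert (HK : (0 <= K)%R) by (unfold K; nra).
  assert (H1M : (1 <= M0)%nat). { destruct M0. simpl in HM0. lra. lia. }
  exists K, M0. split; [exact HK|]. split; [exact H1M|].
  intros m Hm.
  assert (Hx : (INR M0 <= INR m)%R) by (apply le_INR; auto).
  assert (Hm1 : (1 <= m)%nat) by lia.
  destruct (cm_facts m Hm1) as [Hc0 [Hab [Hx2 [Hcx Hb2]]]].
  destruct (am_bounds m Hm1) as [Ha1 Ha2].
  assert (Hb0 : (0 < / INR (S m))%R) by (apply Rinv_0_lt_compat, lt_0_INR; lia).
  pose proof (sig_formula m) as SF.
  set (x := INR m) in *. set (a := am m) in *. set (b := (/ INR (S m))%R) in *. set (c := cm m) in *.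
  assert (Hxpos : (1 <= x)%R) by lra.
  assert (HRa : (Rr * a <= 1/4)%R).
  { apply Rle_trans with (Rr * / x)%R. apply Rmult_le_compat_l; lra.
    apply Rmult_le_reg_r with x. lra. rewrite Rmult_assoc, Rinv_l by lra. lra. }
  assert (HKc : (K * c <= 1/2)%R).
  { apply Rle_trans with (K * / x)%R. apply Rmult_le_compat_l; lra.
    apply Rmult_le_reg_r with x. lra. rewrite Rmult_assoc, Rinv_l by lra. lra. }
  assert (Ha2c : (a^2 <= 2 * c)%R).
  { apply Rle_trans with ((/x) ^2)%R; [apply pow_incr; lra | ]. replace ((/x)^2)%R with (/ x ^ 2)%R by (field; lra). exact Hx2. }
  split; [exact HKc|].
  assert (Hwa : forall w, (Cmod w <= Rr)%R -> (Cmod (w * RtoC a) <= Rr * a)%R).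
  { intros w Hw. rewrite Cmod_mult, Cmod_RtoC_pos by lra. apply Rmult_le_compat_r; lra. }
  assert (HD : forall w, (Cmod w <= Rr)%R -> (3/4 <= Cmod (1 + w * RtoC b) <= 5/4)%R).
  { intros w Hw. assert (Cmod (w * RtoC b) <= 1/4)%R.
    { rewrite Cmod_mult, Cmod_RtoC_pos by lra. apply Rle_trans with (Rr * a)%R; auto.
      apply Rmult_le_compat; auto using Cmod_ge_0; lra. }
    split.
    - pose proof (Cmod_triangle (1 + w * RtoC b) (- (w * RtoC b))).
      replace (1 + w * RtoC b + - (w * RtoC b)) with (RtoC 1) in H0 by ring.
      rewrite Cmod_1, Cmod_opp in H0. lra.
    - pose proof (Cmod_triangle 1 (w * RtoC b)). rewrite Cmod_1 in H0. lra. }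
  assert (HDn0 : forall w, (Cmod w <= Rr)%R -> 1 + w * RtoC b <> 0).
  { intros w Hw E. destruct (HD w Hw). rewrite E, Cmod_0 in H. lra. }
  set (N := fun w => Rm (w * RtoC a) + w * RtoC (a - b)).
  assert (HN : forall w, (Cmod w <= Rr)%R -> (Cmod (N w) <= (6 * Rr^2 + Rr) * c)%R).
  { intros w Hw. unfold N. eapply Rle_trans; [apply Cmod_triangle|].
    pose proof (Hwa w Hw). pose proof (Cmod_ge_0 (w * RtoC a)).
    pose proof (Rm_bound (w * RtoC a) ltac:(lra)).
    rewrite Cmod_mult, (Cmod_RtoC_pos (a - b)) by lra.
    assert (Cmod (w * RtoC a) ^ 2 <= (Rr * a) ^ 2)%R by (apply pow_incr; lra).
    assert (Cmod w * (a - b) <= Rr * c)%R by (apply Rmult_le_compat; auto using Cmod_ge_0; lra).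
    assert ((Rr * a)^2 = Rr^2 * a^2)%R by ring.
    assert (Rr^2 * a^2 <= Rr^2 * (2 * c))%R by (apply Rmult_le_compat_l; nra).
    nra. }
  assert (Hsig : forall w, (Cmod w <= Rr)%R -> sig m w = N w / (1 + w * RtoC b)).
  { intros w Hw. unfold N. apply SF; auto. }
  intros w v Hw Hv. split.
  - rewrite Hsig by auto. eapply Rle_trans.
    + apply Cmod_div_le with (B := (3/4)%R); [auto | apply HN, Hw | destruct (HD w Hw); lra].
    + unfold K. nra.
  - rewrite !Hsig by auto.
    replace (N w / (1 + w * RtoC b) - N v / (1 + v * RtoC b)) with
      (((N w - N v) * (1 + v * RtoC b) - N v * ((w - v) * RtoC b)) / ((1 + w * RtoC b) * (1 + v * RtoC b)))
      by (field; auto).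
    set (d := Cmod (w - v)).
    assert (Hd : (d <= 2 * Rr)%R).
    { unfold d. replace (w - v) with (w + - v) by ring. eapply Rle_trans; [apply Cmod_triangle|].
      rewrite Cmod_opp. lra. }
    assert (Hd0 : (0 <= d)%R) by apply Cmod_ge_0.
    assert (HNN : (Cmod (N w - N v) <= (30 * Rr + 1) * c * d)%R).
    { unfold N. replace (Rm (w * RtoC a) + w * RtoC (a - b) - (Rm (v * RtoC a) + v * RtoC (a - b)))
        with ((Rm (w * RtoC a) - Rm (v * RtoC a)) + (w - v) * RtoC (a - b)) by ring.
      eapply Rle_trans; [apply Cmod_triangle|].
      pose proof (Hwa v Hv).
      assert (Hwv : Cmod (w * RtoC a - v * RtoC a) = (d * a)%R).
      { replace (w * RtoC a - v * RtoC a) with ((w - v) * RtoC a) by ring.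
        rewrite Cmod_mult, Cmod_RtoC_pos by lra. reflexivity. }
      assert (HdA : (d * a <= 2 * Rr * a)%R) by (apply Rmult_le_compat_r; lra).
      pose proof (Rm_lip (w * RtoC a) (v * RtoC a) ltac:(lra) ltac:(rewrite Hwv; lra)).
      rewrite Hwv in H0.
      rewrite Cmod_mult, (Cmod_RtoC_pos (a - b)) by lra. fold d.
      pose proof (Cmod_ge_0 (v * RtoC a)).
      assert (9 * Cmod (v * RtoC a) * (d * a) <= 9 * (Rr * a) * (d * a))%R.
      { apply Rmult_le_compat_r. nra. lra. }
      assert (3 * (d * a) ^ 2 <= 3 * (2 * Rr * a) * (d * a))%R.
      { replace ((d * a) ^ 2)%R with ((d * a) * (d * a))%R by ring.
        assert ((d * a) * (d * a) <= (2 * Rr * a) * (d * a))%R by (apply Rmult_le_compat_r; nra). lra. }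
      assert (15 * Rr * a^2 * d <= 15 * Rr * (2 * c) * d)%R.
      { apply Rmult_le_compat_r; auto. apply Rmult_le_compat_l; nra. }
      assert (d * (a - b) <= d * c)%R by (apply Rmult_le_compat_l; lra).
      nra. }
    destruct (HD w Hw) as [HDw1 HDw2]. destruct (HD v Hv) as [HDv1 HDv2].
    pose proof (HN v Hv).
    eapply Rle_trans.
    + apply Cmod_div_le with (A := ((30 * Rr + 1) * c * d * (5/4) + (6 * Rr^2 + Rr) * c * (d * (1/2)))%R)
        (B := (9/16)%R).
      * apply Cmult_neq_0; auto.
      * eapply Rle_trans. replace ((N w - N v) * (1 + v * RtoC b) - N v * ((w - v) * RtoC b))
          with ((N w - N v) * (1 + v * RtoC b) + - (N v * ((w - v) * RtoC b))) by ring.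
        apply Cmod_triangle. rewrite Cmod_opp, !Cmod_mult, (Cmod_RtoC_pos b) by lra. fold d.
        apply Rplus_le_compat.
        apply Rmult_le_compat; auto using Cmod_ge_0.
        apply Rmult_le_compat; auto using Cmod_ge_0. nra.
        apply Rmult_le_compat; nra.
      * rewrite Cmod_mult. split. lra. nra.
    + unfold K. assert (0 <= c * d)%R by nra. nra.
Qed.

Open Scope C_scope.

Lemma CGamma_eq z l : filterlim (gauss_seq z) eventually (locally l) -> CGamma z = l.
Proof.
  intros H. unfold CGamma.
  set (P := fun l0 : C => filterlim (gauss_seq z) eventually (locally l0)).
  assert (Hs : P (epsilon (inhabits (RtoC 0)) P)) by (apply epsilon_spec; exists l; exact H).
  pose proof (@filterlim_locally_unique nat C_AbsRing C_NormedModule eventually _ (gauss_seq z)) as U.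
  exact (U _ _ Hs H).
Qed.

Lemma tail_filterlim (u : nat -> C) l N A :
  (forall n, (N <= n)%nat -> (Cmod (l - u n) <= A / INR n)%R) -> filterlim u eventually (locally l).
Proof.
  intros H P [eps HP].
  destruct (nat_large (Rmax 0 A / eps + 1)) as [N' HN'].
  exists (max N (S N')). intros n Hn. apply HP.
  apply C_NormedModule_mixin_compat1.
  assert (Hn1 : (INR (S N') <= INR n)%R) by (apply le_INR; lia).
  rewrite S_INR in Hn1. pose proof (cond_pos eps).
  assert (Hpos : (0 < INR n)%R) by (apply lt_0_INR; lia).
  specialize (H n ltac:(lia)).
  replace (minus (u n) l) with (- (l - u n)) by (unfold minus, plus, opp; simpl; ring).
  change (Cmod (- (l - u n)) < eps)%R. rewrite Cmod_opp.
  eapply Rle_lt_trans; [exact H|].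
  apply Rle_lt_trans with (Rmax 0 A / INR n)%R.
  { unfold Rdiv. apply Rmult_le_compat_r. left; apply Rinv_0_lt_compat; lra. apply Rmax_r. }
  apply Rmult_lt_reg_r with (INR n); auto. unfold Rdiv. rewrite Rmult_assoc, Rinv_l by lra.
  rewrite Rmult_1_r.
  assert (Rmax 0 A / eps < INR n)%R by lra.
  apply Rmult_lt_reg_r with (/ eps)%R. apply Rinv_0_lt_compat; lra.
  replace (eps * INR n * / eps)%R with (INR n) by (field; lra). exact H1.
Qed.

Lemma zero_of_bound (x : C) N A : (forall n, (N <= n)%nat -> (Cmod x <= A / INR n)%R) -> x = 0.
Proof.
  intros H. destruct (Ceq_dec x 0) as [E|E]; auto. exfalso.
  apply Cmod_gt_0 in E.
  destruct (nat_large (Rmax 0 A / Cmod x + 1)) as [N' HN'].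
  specialize (H (max N (S N')) ltac:(lia)).
  assert (Hn1 : (INR (S N') <= INR (max N (S N')))%R) by (apply le_INR; lia).
  rewrite S_INR in Hn1. set (n := INR (max N (S N'))) in *.
  assert (Hpos : (0 < n)%R) by (pose proof (pos_INR N'); lra).
  assert (A / n <= Rmax 0 A / n)%R.
  { unfold Rdiv. apply Rmult_le_compat_r. left; apply Rinv_0_lt_compat; lra. apply Rmax_r. }
  assert (Rmax 0 A / Cmod x < n)%R by lra.
  assert (Rmax 0 A < n * Cmod x)%R.
  { apply Rmult_lt_reg_r with (/ Cmod x)%R. apply Rinv_0_lt_compat; lra.
    replace (n * Cmod x * / Cmod x)%R with n by (field; lra). exact H1. }
  assert (Cmod x * n <= Rmax 0 A)%R.
  { apply Rmult_le_reg_r with (/ n)%R. apply Rinv_0_lt_compat; lra.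
    replace (Cmod x * n * / n)%R with (Cmod x) by (field; lra). lra. }
  lra.
Qed.

Open Scope R_scope.

Lemma cm_tel N k : (1 <= N)%nat -> / INR N - / INR (N + S k) = (/ INR N - / INR (N + k)) + cm (N + k).
Proof. intros. unfold cm. rewrite <- plus_n_Sm. ring. Qed.

Lemma cm_pos m : (1 <= m)%nat -> 0 < cm m.
Proof. intros. destruct (cm_facts m H). lra. Qed.

Lemma tel_bounds N k : (1 <= N)%nat -> 0 <= / INR N - / INR (N + k) <= 1.
Proof.
  intros HN. assert (1 <= INR N) by (apply (le_INR 1); lia).
  assert (INR N <= INR (N + k)) by (apply le_INR; lia).
  split.
  - assert (/ INR (N + k) <= / INR N) by (apply Rinv_le_contravar; lra). lra.
  - assert (/ INR N <= 1) by (rewrite <- Rinv_1; apply Rinv_le_contravar; lra).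
    assert (0 < / INR (N + k)) by (apply Rinv_0_lt_compat; lra). lra.
Qed.

Lemma growth (u : nat -> R) (K K' : R) N : (1 <= N)%nat -> 0 <= K -> 0 <= K' -> 0 <= u N ->
  (forall m, (N <= m)%nat -> u (S m) <= u m * (1 + K * cm m) + K' * cm m) ->
  forall n, (N <= n)%nat -> u n <= (u N + K') * exp K.
Proof.
  intros HN HK HK' Hu0 Hrec.
  assert (Hmain : forall k, u (N + k)%nat <= (u N + K' * (/ INR N - / INR (N + k))) * exp (K * (/ INR N - / INR (N + k)))).
  { induction k.
    - rewrite Nat.add_0_r. replace (/ INR N - / INR N) with 0 by ring. rewrite !Rmult_0_r, exp_0. lra.
    - specialize (Hrec (N + k)%nat ltac:(lia)).
      rewrite cm_tel by auto. replace (u (N + S k)%nat) with (u (S (N + k))) by (f_equal; lia).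
      pose proof (cm_pos (N + k) ltac:(lia)).
      destruct (tel_bounds N k HN).
      set (t := / INR N - / INR (N + k)) in *. set (c := cm (N + k)) in *.
      replace (K * (t + c)) with (K * t + K * c) by ring. rewrite exp_plus.
      pose proof (exp_ineq1_le (K * c)). pose proof (exp_pos (K * t)).
      assert (1 <= exp (K * t)) by (pose proof (exp_ineq1_le (K * t)); nra).
      assert (1 <= exp (K * c)) by nra.
      assert (u (N + k)%nat * (1 + K * c) <= (u N + K' * t) * exp (K * t) * (1 + K * c)).
      { apply Rmult_le_compat_r; nra. }
      assert ((u N + K' * t) * exp (K * t) * (1 + K * c) <= (u N + K' * t) * exp (K * t) * exp (K * c)).
      { apply Rmult_le_compat_l; [|lra]. apply Rmult_le_pos; nra. }
      assert (K' * c <= K' * c * (exp (K * t) * exp (K * c))).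
      { rewrite <- (Rmult_1_r (K' * c)) at 1. apply Rmult_le_compat_l. nra. nra. }
      nra. }
  intros n Hn. replace n with (N + (n - N))%nat by lia.
  specialize (Hmain (n - N)%nat). destruct (tel_bounds N (n - N) HN).
  eapply Rle_trans; [exact Hmain|].
  apply Rmult_le_compat.
  - nra.
  - left; apply exp_pos.
  - nra.
  - destruct (Req_dec (K * (/ INR N - / INR (N + (n - N)))) K) as [E|E]. rewrite E; lra.
    left. apply exp_increasing. nra.
Qed.

Lemma real_lim (x : nat -> R) N B : 0 <= B -> (1 <= N)%nat ->
  (forall n k, (N <= n)%nat -> Rabs (x (n + k)%nat - x n) <= B * (/ INR n - / INR (n + k))) ->
  exists l, forall n, (N <= n)%nat -> Rabs (l - x n) <= B / INR n.
Proof.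
  intros HB HN H.
  assert (HC : Cauchy_crit x).
  { intros eps Heps. destruct (nat_large (B / eps + 1)) as [N' HN'].
    exists (max N N'). intros n m Hn Hm. unfold Rdist.
    assert (Hbig : forall p q, (max N N' <= p)%nat -> (p <= q)%nat -> Rabs (x q - x p) < eps).
    { intros p q Hp Hq. replace q with (p + (q - p))%nat by lia.
      eapply Rle_lt_trans; [apply H; lia|].
      destruct (tel_bounds p (q - p) ltac:(lia)).
      assert (INR N' <= INR p) by (apply le_INR; lia).
      assert (0 < INR p) by (apply lt_0_INR; lia).
      assert (/ INR (p + (q - p)) > 0) by (apply Rinv_0_lt_compat, lt_0_INR; lia).
      apply Rle_lt_trans with (B * / INR p). apply Rmult_le_compat_l; lra.
      apply Rmult_lt_reg_r with (INR p); auto. rewrite Rmult_assoc, Rinv_l, Rmult_1_r by lra.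
      assert (B / eps < INR p) by lra.
      apply Rmult_lt_reg_r with (/ eps). apply Rinv_0_lt_compat; lra.
      replace (eps * INR p * / eps) with (INR p) by (field; lra). exact H5. }
    destruct (Nat.le_ge_cases n m).
    - rewrite Rabs_minus_sym. apply Hbig; lia.
    - apply Hbig; lia. }
  destruct (Rcomplete.R_complete x HC) as [l Hl]. exists l. intros n Hn.
  apply le_epsilon. intros eps Heps.
  destruct (Hl eps Heps) as [N1 HN1].
  specialize (HN1 (max n N1) ltac:(lia)). unfold Rdist in HN1.
  specialize (H n (max n N1 - n)%nat Hn). replace (n + (max n N1 - n))%nat with (max n N1) in H by lia.
  destruct (tel_bounds n (max n N1 - n) ltac:(lia)).
  replace (n + (max n N1 - n))%nat with (max n N1) in * by lia.
  assert (B * (/ INR n - / INR (max n N1)) <= B / INR n).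
  { unfold Rdiv. apply Rmult_le_compat_l; auto. assert (0 < / INR (max n N1)) by (apply Rinv_0_lt_compat, lt_0_INR; lia). lra. }
  replace (l - x n) with ((x (max n N1) - x n) - (x (max n N1) - l)) by ring.
  eapply Rle_trans; [apply Rabs_triang|]. rewrite Rabs_Ropp. lra.
Qed.

Open Scope C_scope.

Lemma conv_tail (u : nat -> C) N B : (0 <= B)%R -> (1 <= N)%nat ->
  (forall m, (N <= m)%nat -> (Cmod (u (S m) - u m) <= B * cm m)%R) ->
  exists l, forall n, (N <= n)%nat -> (Cmod (l - u n) <= 2 * B / INR n)%R.
Proof.
  intros HB HN H.
  assert (Ht : forall n k, (N <= n)%nat -> (Cmod (u (n + k)%nat - u n) <= B * (/ INR n - / INR (n + k)))%R).
  { intros n k Hn. induction k.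
    - rewrite Nat.add_0_r. replace (u n - u n) with (RtoC 0) by ring. rewrite Cmod_0.
      replace (/ INR n - / INR n)%R with 0%R by ring. lra.
    - rewrite cm_tel by lia. replace (u (n + S k)%nat) with (u (S (n + k))) by (f_equal; lia).
      replace (u (S (n + k)) - u n) with ((u (S (n + k)) - u (n + k)%nat) + (u (n + k)%nat - u n)) by ring.
      eapply Rle_trans; [apply Cmod_triangle|]. specialize (H (n + k)%nat ltac:(lia)). lra. }
  destruct (real_lim (fun n => fst (u n)) N B HB HN) as [lr Hlr].
  { intros n k Hn. eapply Rle_trans; [|apply (Ht n k Hn)].
    destruct (Cmod_re_im (u (n + k)%nat - u n)) as [H1 _]. simpl in H1. exact H1. }
  destruct (real_lim (fun n => snd (u n)) N B HB HN) as [li Hli].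
  { intros n k Hn. eapply Rle_trans; [|apply (Ht n k Hn)].
    destruct (Cmod_re_im (u (n + k)%nat - u n)) as [_ H1]. simpl in H1. exact H1. }
  exists (lr, li). intros n Hn. eapply Rle_trans; [apply Cmod_le_sum|].
  simpl. specialize (Hlr n Hn). specialize (Hli n Hn). simpl in *. 
  assert (0 < INR n)%R by (apply lt_0_INR; lia).
  replace (2 * B / INR n)%R with (B / INR n + B / INR n)%R by (field; lra).
  apply Rplus_le_compat; auto.
Qed.

Lemma Cmod_1ps_low (s : C) : (Cmod s <= 1/2)%R -> (1/2 <= Cmod (1 + s))%R.
Proof.
  intros H. pose proof (Cmod_triangle (1 + s) (- s)).
  replace (1 + s + - s) with (RtoC 1) in H0 by ring. rewrite Cmod_1, Cmod_opp in H0. lra.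
Qed.

Lemma prod_conv (u s : nat -> C) K N0 : (0 <= K)%R -> (1 <= N0)%nat ->
  (forall m, (N0 <= m)%nat -> u (S m) = u m * (1 + s m) /\ (Cmod (s m) <= K * cm m)%R /\ (K * cm m <= 1/2)%R) ->
  exists l A, (forall n, (N0 <= n)%nat -> (Cmod (l - u n) <= A / INR n)%R) /\
    (forall n, (N0 <= n)%nat -> (Cmod (u n) <= Cmod (u N0) * exp K)%R) /\
    (u N0 <> 0 -> l <> 0).
Proof.
  intros HK HN H.
  assert (Hg : forall n, (N0 <= n)%nat -> (Cmod (u n) <= Cmod (u N0) * exp K)%R).
  { intros n Hn.
    pose proof (growth (fun n => Cmod (u n)) K 0 N0 HN HK ltac:(lra) (Cmod_ge_0 _)) as G.
    rewrite Rplus_0_r in G. apply G; auto. intros m Hm. destruct (H m Hm) as [E [Hs _]].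
    rewrite E, Cmod_mult. rewrite Rmult_0_l, Rplus_0_r.
    apply Rmult_le_compat_l; auto using Cmod_ge_0.
    eapply Rle_trans; [apply Cmod_triangle|]. rewrite Cmod_1. lra. }
  set (Mb := (Cmod (u N0) * exp K)%R).
  assert (HMb : (0 <= Mb)%R) by (unfold Mb; pose proof (exp_pos K); pose proof (Cmod_ge_0 (u N0)); nra).
  destruct (conv_tail u N0 (Mb * K) ltac:(nra) HN) as [l Hl].
  { intros m Hm. destruct (H m Hm) as [E [Hs _]].
    replace (u (S m) - u m) with (u m * s m) by (rewrite E; ring).
    rewrite Cmod_mult. rewrite Rmult_assoc. apply Rmult_le_compat; auto using Cmod_ge_0. }
  exists l, (2 * (Mb * K))%R. split; [exact Hl|]. split; [exact Hg|].
  intros Hu0 Hl0.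
  assert (Hnz : forall n, (N0 <= n)%nat -> u n <> 0).
  { intros n Hn. induction Hn; auto. destruct (H m Hn) as [E [Hs Hk]]. rewrite E.
    apply Cmult_neq_0; auto. intros E1. pose proof (Cmod_1ps_low (s m) ltac:(lra)).
    rewrite E1, Cmod_0 in H0. lra. }
  set (v := fun n => / u n).
  assert (Hgv : forall n, (N0 <= n)%nat -> (Cmod (v n) <= Cmod (v N0) * exp (2 * K))%R).
  { intros n Hn.
    pose proof (growth (fun n => Cmod (v n)) (2 * K) 0 N0 HN ltac:(lra) ltac:(lra) (Cmod_ge_0 _)) as G.
    rewrite Rplus_0_r in G. apply G; auto. intros m Hm. destruct (H m Hm) as [E [Hs Hk]].
    rewrite Rmult_0_l, Rplus_0_r. unfold v. rewrite E.
    assert (H1s : 1 + s m <> 0).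
    { intros E1. pose proof (Cmod_1ps_low (s m) ltac:(lra)). rewrite E1, Cmod_0 in H0. lra. }
    replace (/ (u m * (1 + s m))) with (/ u m * / (1 + s m)) by (field; split; auto).
    rewrite Cmod_mult. apply Rmult_le_compat_l; auto using Cmod_ge_0.
    replace (/ (1 + s m)) with (1 - s m / (1 + s m)) by (field; auto).
    eapply Rle_trans; [replace (1 - s m / (1 + s m)) with (1 + - (s m / (1 + s m))) by ring; apply Cmod_triangle|].
    rewrite Cmod_1, Cmod_opp. apply Rplus_le_compat_l.
    eapply Rle_trans. apply Cmod_div_le with (B := (1/2)%R); [auto | apply Hs | pose proof (Cmod_1ps_low (s m)); lra].
    lra. }
  set (Mv := (Cmod (v N0) * exp (2 * K))%R).
  assert (HMv : (0 <= Mv)%R) by (unfold Mv; pose proof (exp_pos (2 * K)); pose proof (Cmod_ge_0 (v N0)); nra).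
  destruct (conv_tail v N0 (Mv * (2 * K)) ltac:(nra) HN) as [l' Hl'].
  { intros m Hm. destruct (H m Hm) as [E [Hs Hk]].
    assert (H1s : 1 + s m <> 0).
    { intros E1. pose proof (Cmod_1ps_low (s m) ltac:(lra)). rewrite E1, Cmod_0 in H0. lra. }
    pose proof (Hnz m Hm).
    replace (v (S m) - v m) with (v m * (- (s m / (1 + s m)))) by (unfold v; rewrite E; field; split; auto).
    rewrite Cmod_mult, Cmod_opp. rewrite Rmult_assoc. apply Rmult_le_compat; auto using Cmod_ge_0.
    eapply Rle_trans. apply Cmod_div_le with (B := (1/2)%R); [auto | apply Hs | pose proof (Cmod_1ps_low (s m)); lra].
    lra. }
  assert (E1 : l * l' - 1 = 0).
  { apply (zero_of_bound _ N0 (2 * (Mb * K) * Cmod l' + Mb * (2 * (Mv * (2 * K))))).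
    intros n Hn.
    replace (l * l' - 1) with ((l - u n) * l' + u n * (l' - v n)) by (unfold v; field; apply Hnz; auto).
    eapply Rle_trans; [apply Cmod_triangle|]. rewrite !Cmod_mult.
    assert (0 < INR n)%R by (apply lt_0_INR; lia).
    specialize (Hl n Hn). specialize (Hl' n Hn). specialize (Hg n Hn). fold Mb in Hg.
    pose proof (Cmod_ge_0 l'). pose proof (Cmod_ge_0 (u n)). pose proof (Cmod_ge_0 (l' - v n)).
    assert (Cmod (l - u n) * Cmod l' <= 2 * (Mb * K) / INR n * Cmod l')%R by (apply Rmult_le_compat_r; auto).
    assert (Cmod (u n) * Cmod (l' - v n) <= Mb * (2 * (Mv * (2 * K)) / INR n))%R by (apply Rmult_le_compat; auto).
    replace ((2 * (Mb * K) * Cmod l' + Mb * (2 * (Mv * (2 * K)))) / INR n)%R with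
      (2 * (Mb * K) / INR n * Cmod l' + Mb * (2 * (Mv * (2 * K)) / INR n))%R by (field; lra).
    lra. }
  rewrite Hl0 in E1. apply (RtoC_neq0 1 ltac:(lra)). replace (RtoC 1) with (-(0 * l' - 1)) by ring. rewrite E1. ring.
Qed.

Open Scope C_scope.

Lemma Cdiv_neq0 (x y : C) : x <> 0 -> y <> 0 -> x / y <> 0.
Proof. intros Hx Hy E. apply Hx. replace x with (x / y * y) by (field; auto). rewrite E. ring. Qed.

Lemma gauss_neq0 w n : Dset w -> gauss_seq w n <> 0.
Proof.
  intros H. rewrite gauss_eq. apply Cdiv_neq0; [|apply P_neq0; auto].
  apply Cmult_neq_0. apply RtoC_neq0, INR_fact_neq_0. apply cexp_neq0.
Qed.

Lemma Gamma_conv w : Dset w -> exists N A, (1 <= N)%nat /\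
  (forall n, (N <= n)%nat -> (Cmod (CGamma w - gauss_seq w n) <= A / INR n)%R) /\ CGamma w <> 0.
Proof.
  intros Hw. destruct (sig_est (Cmod w) (Cmod_ge_0 w)) as [K [M0 [HK [HM0 Hs]]]].
  destruct (prod_conv (gauss_seq w) (fun m => sig m w) K M0 HK HM0) as [l [A [Hl [_ Hl0]]]].
  { intros m Hm. destruct (Hs m Hm) as [Hk Hs']. destruct (Hs' w w (Rle_refl _) (Rle_refl _)) as [H1 _].
    split; [|split; auto]. rewrite gauss_S by auto. unfold sig. ring. }
  assert (E : CGamma w = l) by (apply CGamma_eq; apply (tail_filterlim _ _ M0 A); auto).
  exists M0, A. split; auto. rewrite E. split; auto. apply Hl0, gauss_neq0, Hw.
Qed.

Lemma Dset_S w : Dset w -> Dset (w + 1).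
Proof.
  intros H j. replace (w + 1 + RtoC (INR j)) with (w + RtoC (INR (S j))). apply H.
  rewrite S_INR. apply injective_projections; simpl; ring.
Qed.

Lemma Dset_plus w k : Dset w -> Dset (w + RtoC (INR k)).
Proof.
  intros H j. replace (w + RtoC (INR k) + RtoC (INR j)) with (w + RtoC (INR (k + j))). apply H.
  rewrite plus_INR. apply injective_projections; simpl; ring.
Qed.

Lemma P_shift n w : P (S n) w = w * P n (w + 1).
Proof.
  induction n.
  - rewrite P_S, !P_0. simpl. ring.
  - rewrite P_S, IHn, (P_S n (w + 1)). rewrite !S_INR. rewrite !RtoC_plus. ring.
Qed.

Lemma cpow_succ n w : (1 <= n)%nat -> nat_cpow n (w + 1) = nat_cpow n w * RtoC (INR n).
Proof.
  intros Hn. unfold nat_cpow.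
  replace ((w + 1) * RtoC (ln (INR n))) with (w * RtoC (ln (INR n)) + RtoC (ln (INR n))) by ring.
  rewrite cexp_plus, cexp_R, exp_ln. reflexivity. apply lt_0_INR; lia.
Qed.

Lemma gauss_succ w n : Dset w -> (1 <= n)%nat ->
  gauss_seq (w + 1) n = gauss_seq w n * (w * RtoC (INR n) / (w + RtoC (INR (S n)))).
Proof.
  intros Hw Hn. rewrite !gauss_eq. rewrite cpow_succ by auto.
  assert (E : P n (w + 1) = P n w * (w + RtoC (INR (S n))) / w).
  { rewrite <- P_S, P_shift. field. specialize (Hw 0%nat). simpl in Hw. intros E. apply Hw. rewrite E. ring. }
  rewrite E. pose proof (P_neq0 n w Hw). pose proof (Hw (S n)). pose proof (Hw 0%nat). simpl in H1.
  assert (w <> 0) by (intros E'; apply H1; rewrite E'; ring).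
  field. split; auto.
Qed.

Lemma Cmod_plus_nat_low w n : (2 * Cmod w <= INR n)%R -> (INR n / 2 <= Cmod (w + RtoC (INR (S n))))%R.
Proof.
  intros H. pose proof (Cmod_triangle (w + RtoC (INR (S n))) (- w)).
  replace (w + RtoC (INR (S n)) + - w) with (RtoC (INR (S n))) in H0 by ring.
  rewrite Cmod_opp, Cmod_RtoC_pos in H0 by apply pos_INR. pose proof (S_INR n). lra.
Qed.

Lemma Cminus_eq0 (a b : C) : a - b = 0 -> a = b.
Proof. intros H. replace a with (a - b + b) by ring. rewrite H. ring. Qed.

Lemma Gamma_succ w : Dset w -> CGamma (w + 1) = w * CGamma w.
Proof.
  intros Hw. destruct (Gamma_conv w Hw) as [N1 [A1 [HN1 [H1 _]]]].
  destruct (Gamma_conv (w + 1) (Dset_S w Hw)) as [N2 [A2 [HN2 [H2 _]]]].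
  destruct (nat_large (2 * Cmod w)) as [N3 HN3].
  assert (H0 : w + 1 <> 0) by (intros E; apply (Hw 1%nat); rewrite <- E; simpl; apply injective_projections; simpl; ring).
  apply Cminus_eq0.
  apply (zero_of_bound _ (max (max N1 N2) (max N3 1))
    (A2 + (Cmod (CGamma w) + Rabs A1) * (2 * (Cmod w * Cmod (w + 1))) + Cmod w * A1)).
  intros n Hn.
  assert (Hn0 : (0 < INR n)%R) by (apply lt_0_INR; lia).
  assert (HnN3 : (INR N3 <= INR n)%R) by (apply le_INR; lia).
  specialize (H1 n ltac:(lia)). specialize (H2 n ltac:(lia)).
  rewrite gauss_succ in H2 by (auto; lia).
  set (g := gauss_seq w n) in *.
  set (r := w * RtoC (INR n) / (w + RtoC (INR (S n)))) in *.
  assert (Hden : (INR n / 2 <= Cmod (w + RtoC (INR (S n))))%R) by (apply Cmod_plus_nat_low; lra).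
  assert (Hden0 : w + RtoC (INR (S n)) <> 0).
  { intros E. rewrite E, Cmod_0 in Hden. lra. }
  assert (Er : r - w = - (w * (w + 1)) / (w + RtoC (INR (S n)))).
  { unfold r. rewrite S_INR, RtoC_plus. rewrite S_INR, RtoC_plus in Hden0. field. auto. }
  replace (CGamma (w + 1) - w * CGamma w) with
    ((CGamma (w + 1) - g * r) + g * (r - w) + w * (g - CGamma w)) by ring.
  assert (Hg : (Cmod g <= Cmod (CGamma w) + Rabs A1)%R).
  { replace g with (CGamma w - (CGamma w - g)) by ring.
    eapply Rle_trans; [replace (CGamma w - (CGamma w - g)) with (CGamma w + - (CGamma w - g)) by ring; apply Cmod_triangle|].
    rewrite Cmod_opp. apply Rplus_le_compat_l. eapply Rle_trans; [exact H1|].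
    assert (1 <= INR n)%R by (apply (le_INR 1); lia).
    unfold Rdiv. apply Rle_trans with (Rabs A1 * / INR n)%R.
    apply Rmult_le_compat_r. left; apply Rinv_0_lt_compat; lra. apply Rle_abs.
    rewrite <- (Rmult_1_r (Rabs A1)) at 2. apply Rmult_le_compat_l. apply Rabs_pos.
    rewrite <- Rinv_1. apply Rinv_le_contravar; lra. }
  assert (Hrw : (Cmod (r - w) <= 2 * (Cmod w * Cmod (w + 1)) / INR n)%R).
  { rewrite Er. eapply Rle_trans. apply Cmod_div_le with (B := (INR n / 2)%R); [auto | | lra].
    rewrite Cmod_opp, Cmod_mult. apply Rle_refl. right. field. lra. }
  eapply Rle_trans; [apply Cmod_triangle|].
  eapply Rle_trans; [apply Rplus_le_compat_r, Cmod_triangle|].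
  rewrite !Cmod_mult.
  pose proof (Cmod_ge_0 g). pose proof (Cmod_ge_0 w). pose proof (Cmod_ge_0 (r - w)).
  assert (Cmod g * Cmod (r - w) <= (Cmod (CGamma w) + Rabs A1) * (2 * (Cmod w * Cmod (w + 1)) / INR n))%R
    by (apply Rmult_le_compat; auto).
  assert (Cmod w * Cmod (g - CGamma w) <= Cmod w * (A1 / INR n))%R.
  { apply Rmult_le_compat_l; auto. rewrite <- Cmod_opp. replace (- (g - CGamma w)) with (CGamma w - g) by ring. exact H1. }
  replace ((A2 + (Cmod (CGamma w) + Rabs A1) * (2 * (Cmod w * Cmod (w + 1))) + Cmod w * A1) / INR n)%R
    with (A2 / INR n + (Cmod (CGamma w) + Rabs A1) * (2 * (Cmod w * Cmod (w + 1)) / INR n) + Cmod w * (A1 / INR n))%R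
    by (field; lra).
  lra.
Qed.

Fixpoint poch (a : C) (k : nat) : C :=
  match k with 0 => 1 | S k => poch a k * (a + RtoC (INR k)) end.

Lemma Gamma_poch w k : Dset w -> CGamma (w + RtoC (INR k)) = poch w k * CGamma w.
Proof.
  intros Hw. induction k.
  - simpl. replace (w + RtoC 0) with w by (apply injective_projections; simpl; ring). ring.
  - simpl poch. replace (w + RtoC (INR (S k))) with ((w + RtoC (INR k)) + 1)
      by (rewrite S_INR; apply injective_projections; simpl; ring).
    rewrite Gamma_succ by (apply Dset_plus; auto). rewrite IHk. ring.
Qed.

Open Scope C_scope.

Lemma Cmod_sub_tri (a b : C) : (Cmod a <= Cmod b + Cmod (a - b))%R.
Proof. replace a with (b + (a - b)) at 1 by ring. apply Cmod_triangle. Qed.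

Lemma hd_const c z : hd (fun _ => c) z 0.
Proof.
  intros eps Heps. exists 1%R. split. lra. intros w _.
  replace (c - c - 0 * (w - z)) with (RtoC 0) by ring. rewrite Cmod_0.
  pose proof (Cmod_ge_0 (w - z)). nra.
Qed.

Lemma hd_id z : hd (fun w => w) z 1.
Proof.
  intros eps Heps. exists 1%R. split. lra. intros w _.
  replace (w - z - 1 * (w - z)) with (RtoC 0) by ring. rewrite Cmod_0.
  pose proof (Cmod_ge_0 (w - z)). nra.
Qed.

Lemma hd_ext f g z L : (exists d, (0 < d)%R /\ forall w, (Cmod (w - z) < d)%R -> f w = g w) ->
  hd f z L -> hd g z L.
Proof.
  intros [d [Hd Hfg]] H eps Heps. destruct (H eps Heps) as [eta [Heta Hw]].
  exists (Rmin eta d). split. apply Rmin_pos; auto. intros w Hw'.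
  assert (Hz : f z = g z).
  { apply Hfg. replace (z - z) with (RtoC 0) by ring. rewrite Cmod_0. auto. }
  rewrite <- (Hfg w), <- Hz. apply Hw. eapply Rlt_le_trans; [exact Hw'|apply Rmin_l].
  eapply Rlt_le_trans; [exact Hw'|apply Rmin_r].
Qed.

Lemma hd_affine (f : C -> C) (a b z L : C) : a <> 0 -> hd f (a * z + b) L -> hd (fun w => f (a * w + b)) z (a * L).
Proof.
  intros Ha H eps Heps.
  assert (Hca : (0 < Cmod a)%R). { apply (proj1 (Cmod_gt_0 a)). exact Ha. }
  destruct (H (eps / Cmod a)%R ltac:(apply Rdiv_lt_0_compat; auto)) as [eta [Heta Hw]].
  exists (eta / Cmod a)%R. split. apply Rdiv_lt_0_compat; auto. intros w Hw'.
  specialize (Hw (a * w + b)).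
  replace (a * w + b - (a * z + b)) with (a * (w - z)) in Hw by ring.
  rewrite Cmod_mult in Hw.
  replace (f (a * w + b) - f (a * z + b) - a * L * (w - z))
    with (f (a * w + b) - f (a * z + b) - L * (a * (w - z))) by ring.
  eapply Rle_trans. apply Hw.
  - apply Rmult_lt_reg_r with (/ Cmod a)%R. apply Rinv_0_lt_compat; auto.
    replace (Cmod a * Cmod (w - z) * / Cmod a)%R with (Cmod (w - z)) by (field; lra). exact Hw'.
  - right. field. lra.
Qed.

Lemma hd_cont f z L : hd f z L -> exists eta, (0 < eta)%R /\ forall w, (Cmod (w - z) < eta)%R ->
  (Cmod (f w - f z) <= (Cmod L + 1) * Cmod (w - z))%R.
Proof.
  intros H. destruct (H 1%R ltac:(lra)) as [eta [Heta Hw]]. exists eta. split; auto.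
  intros w Hw'. specialize (Hw w Hw').
  eapply Rle_trans. apply (Cmod_sub_tri _ (L * (w - z))). rewrite Cmod_mult. lra.
Qed.

Lemma hd_mult f g z f' g' : hd f z f' -> hd g z g' ->
  hd (fun w => f w * g w) z (f' * g z + f z * g').
Proof.
  intros Hf Hg eps Heps.
  destruct (hd_cont g z g' Hg) as [eta0 [Heta0 Hc]].
  set (Mg := (Cmod (g z) + Cmod g' + 1)%R).
  set (Mf := (Cmod (f z) + 1)%R).
  set (Md := (Cmod f' * (Cmod g' + 1) + 1)%R).
  assert (HMg : (0 < Mg)%R) by (unfold Mg; pose proof (Cmod_ge_0 (g z)); pose proof (Cmod_ge_0 g'); lra).
  assert (HMf : (0 < Mf)%R) by (unfold Mf; pose proof (Cmod_ge_0 (f z)); lra).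
  assert (HMd : (0 < Md)%R) by (unfold Md; pose proof (Cmod_ge_0 f'); pose proof (Cmod_ge_0 g'); nra).
  destruct (Hf (eps / (3 * Mg))%R ltac:(apply Rdiv_lt_0_compat; lra)) as [eta1 [Heta1 H1]].
  destruct (Hg (eps / (3 * Mf))%R ltac:(apply Rdiv_lt_0_compat; lra)) as [eta2 [Heta2 H2]].
  exists (Rmin (Rmin eta0 1) (Rmin (Rmin eta1 eta2) (eps / (3 * Md)))). split.
  { repeat apply Rmin_pos; auto; try lra. apply Rdiv_lt_0_compat; lra. }
  intros w Hw.
  assert (Hw0 : (Cmod (w - z) < eta0)%R).
  { eapply Rlt_le_trans; [exact Hw|]. eapply Rle_trans; [apply Rmin_l|]. apply Rmin_l. }
  assert (Hw1 : (Cmod (w - z) <= 1)%R).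
  { left. eapply Rlt_le_trans; [exact Hw|]. eapply Rle_trans; [apply Rmin_l|]. apply Rmin_r. }
  assert (Hwe1 : (Cmod (w - z) < eta1)%R).
  { eapply Rlt_le_trans; [exact Hw|]. eapply Rle_trans; [apply Rmin_r|]. eapply Rle_trans; [apply Rmin_l|]. apply Rmin_l. }
  assert (Hwe2 : (Cmod (w - z) < eta2)%R).
  { eapply Rlt_le_trans; [exact Hw|]. eapply Rle_trans; [apply Rmin_r|]. eapply Rle_trans; [apply Rmin_l|]. apply Rmin_r. }
  assert (Hwe3 : (Cmod (w - z) < eps / (3 * Md))%R).
  { eapply Rlt_le_trans; [exact Hw|]. eapply Rle_trans; [apply Rmin_r|]. apply Rmin_r. }
  specialize (H1 w Hwe1). specialize (H2 w Hwe2). specialize (Hc w Hw0).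
  set (h := w - z) in *.
  replace (f w * g w - f z * g z - (f' * g z + f z * g') * h) with
    ((f w - f z - f' * h) * g w + f' * h * (g w - g z) + f z * (g w - g z - g' * h)) by (unfold h; ring).
  assert (Hgw : (Cmod (g w) <= Mg)%R).
  { eapply Rle_trans. apply (Cmod_sub_tri _ (g z)). unfold Mg. pose proof (Cmod_ge_0 h).
    pose proof (Cmod_ge_0 g'). nra. }
  pose proof (Cmod_ge_0 h) as Hh0.
  eapply Rle_trans; [apply Cmod_triangle|].
  eapply Rle_trans; [apply Rplus_le_compat_r, Cmod_triangle|].
  rewrite !Cmod_mult.
  assert (T1 : (Cmod (f w - f z - f' * h) * Cmod (g w) <= eps / (3 * Mg) * Cmod h * Mg)%R).
  { apply Rmult_le_compat; auto using Cmod_ge_0. }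
  assert (T2 : (Cmod f' * Cmod h * Cmod (g w - g z) <= Cmod f' * Cmod h * ((Cmod g' + 1) * Cmod h))%R).
  { apply Rmult_le_compat_l; auto. apply Rmult_le_pos; auto using Cmod_ge_0. }
  assert (T3 : (Cmod (f z) * Cmod (g w - g z - g' * h) <= Mf * (eps / (3 * Mf) * Cmod h))%R).
  { apply Rmult_le_compat; auto using Cmod_ge_0. unfold Mf; lra. }
  assert (E1 : (eps / (3 * Mg) * Cmod h * Mg = eps / 3 * Cmod h)%R) by (field; lra).
  assert (E3 : (Mf * (eps / (3 * Mf) * Cmod h) = eps / 3 * Cmod h)%R) by (field; lra).
  assert (T2' : (Cmod f' * Cmod h * ((Cmod g' + 1) * Cmod h) <= eps / 3 * Cmod h)%R).
  { replace (Cmod f' * Cmod h * ((Cmod g' + 1) * Cmod h))%R with ((Cmod f' * (Cmod g' + 1)) * Cmod h * Cmod h)%R by ring.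
    assert (HA : ((Cmod f' * (Cmod g' + 1)) * Cmod h <= Md * Cmod h)%R).
    { apply Rmult_le_compat_r; auto. unfold Md; lra. }
    assert (HB : (Md * Cmod h <= eps / 3)%R).
    { apply Rmult_le_reg_r with (/ Md)%R. apply Rinv_0_lt_compat; auto.
      replace (Md * Cmod h * / Md)%R with (Cmod h) by (field; lra).
      replace (eps / 3 * / Md)%R with (eps / (3 * Md))%R by (field; lra). lra. }
    apply Rmult_le_compat_r with (r := Cmod h) in HA; auto.
    apply Rmult_le_compat_r with (r := Cmod h) in HB; auto. lra. }
  lra.
Qed.

Lemma small_pos_point (z : C) (eta : R) : (0 < eta)%R ->
  exists w, w <> z /\ (Cmod (w - z) < eta)%R.
Proof.
  intros H. exists (z + RtoC (eta / 2)). split.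
  - intros E. assert (E2 : RtoC (eta / 2) = 0) by (replace (RtoC (eta/2)) with (z + RtoC (eta/2) - z) by ring; rewrite E; ring).
    apply (RtoC_neq0 (eta / 2)); auto. lra.
  - replace (z + RtoC (eta / 2) - z) with (RtoC (eta / 2)) by ring. rewrite Cmod_RtoC_pos; lra.
Qed.

Lemma hd_unique f z L1 L2 : hd f z L1 -> hd f z L2 -> L1 = L2.
Proof.
  intros H1 H2. apply Cminus_eq0. destruct (Ceq_dec (L1 - L2) 0) as [E|E]; auto. exfalso.
  assert (Hd : (0 < Cmod (L1 - L2))%R) by (apply (proj1 (Cmod_gt_0 _)); auto).
  destruct (H1 (Cmod (L1 - L2) / 4)%R ltac:(lra)) as [e1 [He1 Hw1]].
  destruct (H2 (Cmod (L1 - L2) / 4)%R ltac:(lra)) as [e2 [He2 Hw2]].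
  destruct (small_pos_point z (Rmin e1 e2) (Rmin_pos _ _ He1 He2)) as [w [Hwz Hw]].
  specialize (Hw1 w (Rlt_le_trans _ _ _ Hw (Rmin_l _ _))).
  specialize (Hw2 w (Rlt_le_trans _ _ _ Hw (Rmin_r _ _))).
  assert (Hh : (0 < Cmod (w - z))%R).
  { apply (proj1 (Cmod_gt_0 _)). intros E'. apply Hwz. apply Cminus_eq0. auto. }
  assert (Cmod ((L1 - L2) * (w - z)) <= Cmod (L1 - L2) / 4 * Cmod (w - z) + Cmod (L1 - L2) / 4 * Cmod (w - z))%R.
  { replace ((L1 - L2) * (w - z)) with ((f w - f z - L2 * (w - z)) + - (f w - f z - L1 * (w - z))) by ring.
    eapply Rle_trans; [apply Cmod_triangle|]. rewrite Cmod_opp. lra. }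
  rewrite Cmod_mult in H. nra.
Qed.

Lemma hd_cexp z : hd cexp z (cexp z).
Proof.
  intros eps Heps. pose proof (Cmod_ge_0 (cexp z)).
  exists (Rmin (1/2) (eps / (3 * Cmod (cexp z) + 1)))%R. split.
  { apply Rmin_pos. lra. apply Rdiv_lt_0_compat; lra. }
  intros w Hw.
  replace (cexp w - cexp z - cexp z * (w - z)) with (cexp z * Rm (w - z)).
  2:{ unfold Rm. replace (cexp w) with (cexp z * cexp (w - z)) by (rewrite <- cexp_plus; f_equal; ring). ring. }
  rewrite Cmod_mult. pose proof (Cmod_ge_0 (w - z)).
  assert (H1 : (Cmod (w - z) <= 1/2)%R) by (left; eapply Rlt_le_trans; [exact Hw | apply Rmin_l]).
  assert (H2 : (Cmod (w - z) <= eps / (3 * Cmod (cexp z) + 1))%R) by (left; eapply Rlt_le_trans; [exact Hw | apply Rmin_r]).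
  pose proof (Rm_bound _ H1).
  assert (H4 : ((3 * Cmod (cexp z) + 1) * Cmod (w - z) <= eps)%R).
  { apply Rmult_le_reg_r with (/ (3 * Cmod (cexp z) + 1))%R. apply Rinv_0_lt_compat; lra.
    replace ((3 * Cmod (cexp z) + 1) * Cmod (w - z) * / (3 * Cmod (cexp z) + 1))%R with (Cmod (w - z)) by (field; lra).
    exact H2. }
  assert (Cmod (cexp z) * Cmod (Rm (w - z)) <= Cmod (cexp z) * (3 * Cmod (w - z) ^ 2))%R
    by (apply Rmult_le_compat_l; auto).
  nra.
Qed.

Lemma hd_inv (z : C) : z <> 0 -> hd (fun w => / w) z (- / (z * z)).
Proof.
  intros Hz eps Heps. assert (Hm : (0 < Cmod z)%R) by (apply (proj1 (Cmod_gt_0 _)); auto).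
  exists (Rmin (Cmod z / 2) (eps * Cmod z ^ 3 / 2))%R. split.
  { apply Rmin_pos. lra. apply Rdiv_lt_0_compat; [|lra]. apply Rmult_lt_0_compat; auto. apply pow_lt; auto. }
  intros w Hw.
  assert (H1 : (Cmod (w - z) < Cmod z / 2)%R) by (eapply Rlt_le_trans; [exact Hw | apply Rmin_l]).
  assert (H2 : (Cmod (w - z) <= eps * Cmod z ^ 3 / 2)%R) by (left; eapply Rlt_le_trans; [exact Hw | apply Rmin_r]).
  assert (Hw0 : (Cmod z / 2 <= Cmod w)%R).
  { pose proof (Cmod_sub_tri z w). replace (z - w) with (- (w - z)) in H by ring. rewrite Cmod_opp in H. lra. }
  assert (Hwn : w <> 0) by (intros E; rewrite E, Cmod_0 in Hw0; lra).
  replace (/ w - / z - - / (z * z) * (w - z)) with ((w - z) * (w - z) / (z * z * w)) by (field; auto).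
  eapply Rle_trans. apply Cmod_div_le with (B := (Cmod z ^ 3 / 2)%R).
  - repeat apply Cmult_neq_0; auto.
  - apply Rle_refl.
  - split. apply Rdiv_lt_0_compat; [apply pow_lt; auto | lra]. rewrite !Cmod_mult.
    replace (Cmod z ^ 3 / 2)%R with (Cmod z * Cmod z * (Cmod z / 2))%R by field.
    apply Rmult_le_compat_l; auto. nra.
  - rewrite Cmod_mult. pose proof (Cmod_ge_0 (w - z)).
    assert (0 < Cmod z ^ 3)%R by (apply pow_lt; auto).
    apply Rmult_le_reg_r with (Cmod z ^ 3 / 2)%R. apply Rdiv_lt_0_compat; lra.
    replace (Cmod (w - z) * Cmod (w - z) / (Cmod z ^ 3 / 2) * (Cmod z ^ 3 / 2))%R with
      (Cmod (w - z) * Cmod (w - z))%R by (field; lra).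
    replace (eps * Cmod (w - z) * (Cmod z ^ 3 / 2))%R with (Cmod (w - z) * (eps * Cmod z ^ 3 / 2))%R by field.
    apply Rmult_le_compat_l; auto.
Qed.

Lemma hd_eqL f z L L' : hd f z L -> L = L' -> hd f z L'.
Proof. intros H E; subst; auto. Qed.

Lemma hd_cexp_lin (c z : C) : hd (fun w => cexp (w * c)) z (c * cexp (z * c)).
Proof.
  destruct (Ceq_dec c 0) as [E|E].
  - subst c. apply hd_eqL with (RtoC 0); [|ring]. eapply hd_ext; [|apply (hd_const (cexp 0) z)].
    exists 1%R. split. lra. intros w _. f_equal. ring.
  - pose proof (hd_affine cexp c 0 z _ E (hd_cexp (c * z + 0))) as H.
    apply hd_eqL with (c * cexp (c * z + 0)); [|f_equal; f_equal; ring].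
    eapply hd_ext; [|exact H]. exists 1%R. split. lra. intros w _. f_equal. ring.
Qed.

Lemma hd_inv_shift (c z : C) : z + c <> 0 -> hd (fun w => / (w + c)) z (- / ((z + c) * (z + c))).
Proof.
  intros Hz. pose proof (hd_affine (fun w => / w) 1 c z _ ltac:(apply RtoC_neq0; lra) (hd_inv (1 * z + c) ltac:(replace (1 * z + c) with (z + c) by ring; auto))) as H.
  apply hd_eqL with (1 * - / ((1 * z + c) * (1 * z + c))); [|replace (1 * z + c) with (z + c) by ring; ring].
  eapply hd_ext; [|exact H]. exists 1%R. split. lra. intros w _. simpl. f_equal. ring.
Qed.

Lemma hd_rho_like (k c d z : C) : z + d <> 0 ->
  exists L, hd (fun w => k * cexp (w * c) * / (w + d)) z L.
Proof.
  intros Hz. eexists. apply hd_mult; [apply hd_mult; [apply hd_const | apply hd_cexp_lin] | apply hd_inv_shift; auto].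
Qed.

Lemma Dset_open z : Dset z -> exists d, (0 < d)%R /\ forall w, (Cmod (w - z) < d)%R -> Dset w.
Proof.
  intros Hz. destruct (nat_large (Cmod z + 1)) as [J HJ].
  assert (Hmin : forall J, exists d, (0 < d)%R /\ forall j, (j < J)%nat -> (d <= Cmod (z + RtoC (INR j)))%R).
  { induction J0 as [|J0 IH].
    - exists 1%R. split. lra. intros j Hj. lia.
    - destruct IH as [d [Hd Hj]]. exists (Rmin d (Cmod (z + RtoC (INR J0)))). split.
      + apply Rmin_pos; auto. apply (proj1 (Cmod_gt_0 _)). apply Hz.
      + intros j Hj'. destruct (Nat.eq_dec j J0) as [->|Hne]. apply Rmin_r.
        eapply Rle_trans; [apply Rmin_l|]. apply Hj. lia. }
  destruct (Hmin J) as [d [Hd Hdj]].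
  exists (Rmin d 1). split. apply Rmin_pos; lra. intros w Hw j E.
  destruct (Nat.lt_ge_cases j J) as [Hj|Hj].
  - specialize (Hdj j Hj). pose proof (Cmod_sub_tri (z + RtoC (INR j)) (w + RtoC (INR j))).
    replace (z + RtoC (INR j) - (w + RtoC (INR j))) with (- (w - z)) in H by ring.
    rewrite Cmod_opp, E, Cmod_0 in H. pose proof (Rmin_l d 1). lra.
  - assert (HjJ : (INR J <= INR j)%R) by (apply le_INR; auto).
    pose proof (Cmod_sub_tri (RtoC (INR j)) (- w)).
    replace (RtoC (INR j) - - w) with (w + RtoC (INR j)) in H by ring.
    rewrite E, Cmod_0, Cmod_opp, Cmod_RtoC_pos in H by apply pos_INR.
    pose proof (Cmod_sub_tri w z). pose proof (Rmin_r d 1). lra.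
Qed.

Lemma gauss_0 w : gauss_seq w 0 = RtoC (INR (Factorial.fact 0)) * cexp (w * RtoC (ln (INR 0))) * / (w + RtoC (INR 0)).
Proof. rewrite gauss_eq, P_0. reflexivity. Qed.

Lemma hd_gauss z : Dset z -> forall n, exists L, hd (fun w => gauss_seq w n) z L.
Proof.
  intros Hz. destruct (Dset_open z Hz) as [d [Hd HD]]. induction n.
  - destruct (hd_rho_like (RtoC (INR (Factorial.fact 0))) (RtoC (ln (INR 0))) (RtoC (INR 0)) z (Hz 0%nat)) as [L HL].
    exists L. eapply hd_ext; [|exact HL]. exists 1%R. split. lra. intros w _. rewrite gauss_0. reflexivity.
  - destruct IHn as [L1 H1].
    destruct (hd_rho_like (RtoC (INR (S n))) (RtoC (am n)) (RtoC (INR (S n))) z (Hz (S n))) as [L2 H2].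
    eexists. eapply hd_ext; [|apply (hd_mult _ _ _ _ _ H1 H2)].
    exists d. split; auto. intros w Hw. rewrite gauss_S by (apply HD; auto). reflexivity.
Qed.

Open Scope C_scope.

Lemma small_tail (A e : R) N : (0 < e)%R -> (1 <= N)%nat ->
  exists M, (N <= M)%nat /\ forall m, (M <= m)%nat -> (A / INR m <= e)%R.
Proof.
  intros He HN. destruct (nat_large (Rabs A / e + 1)) as [M HM]. exists (max N M). split. lia.
  intros m Hm. assert (INR M <= INR m)%R by (apply le_INR; lia).
  assert (0 < INR m)%R by (apply lt_0_INR; lia).
  apply Rmult_le_reg_r with (INR m); auto. unfold Rdiv. rewrite Rmult_assoc, Rinv_l, Rmult_1_r by lra.
  assert (Rabs A / e <= INR m)%R by lra.
  assert (Rabs A <= e * INR m)%R.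
  { apply Rmult_le_reg_r with (/ e)%R. apply Rinv_0_lt_compat; lra.
    replace (e * INR m * / e)%R with (INR m) by (field; lra). exact H1. }
  pose proof (Rle_abs A). lra.
Qed.

Lemma real_cauchy (y : nat -> R) N A : (1 <= N)%nat ->
  (forall n m, (N <= n)%nat -> (N <= m)%nat -> (Rabs (y n - y m) <= A / INR n + A / INR m)%R) ->
  exists l, forall n, (N <= n)%nat -> (Rabs (l - y n) <= A / INR n)%R.
Proof.
  intros HN H.
  assert (HC : Cauchy_crit y).
  { intros eps Heps. destruct (small_tail A (eps / 3) N ltac:(lra) HN) as [M [HM1 HM2]].
    exists M. intros n m Hn Hm. unfold Rdist.
    specialize (H n m ltac:(lia) ltac:(lia)). pose proof (HM2 n Hn). pose proof (HM2 m Hm). lra. }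
  destruct (Rcomplete.R_complete y HC) as [l Hl]. exists l. intros n Hn.
  apply le_epsilon. intros eps Heps.
  destruct (Hl (eps / 2)%R ltac:(lra)) as [N1 HN1].
  destruct (small_tail A (eps / 2) N ltac:(lra) HN) as [M [HM1 HM2]].
  set (m := max (max n N1) M).
  specialize (HN1 m ltac:(unfold m; lia)). unfold Rdist in HN1.
  specialize (H n m Hn ltac:(unfold m; lia)). specialize (HM2 m ltac:(unfold m; lia)).
  replace (l - y n)%R with ((y m - y n) - (y m - l))%R by ring.
  eapply Rle_trans; [apply Rabs_triang|]. rewrite Rabs_Ropp. rewrite Rabs_minus_sym in H. lra.
Qed.

Lemma cauchy_C (x : nat -> C) N A : (1 <= N)%nat ->
  (forall n m, (N <= n)%nat -> (N <= m)%nat -> (Cmod (x n - x m) <= A / INR n + A / INR m)%R) ->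
  exists l, forall n, (N <= n)%nat -> (Cmod (l - x n) <= 2 * A / INR n)%R.
Proof.
  intros HN H.
  destruct (real_cauchy (fun n => fst (x n)) N A HN) as [lr Hlr].
  { intros n m Hn Hm. eapply Rle_trans; [|apply (H n m Hn Hm)].
    destruct (Cmod_re_im (x n - x m)) as [H1 _]. simpl in H1. exact H1. }
  destruct (real_cauchy (fun n => snd (x n)) N A HN) as [li Hli].
  { intros n m Hn Hm. eapply Rle_trans; [|apply (H n m Hn Hm)].
    destruct (Cmod_re_im (x n - x m)) as [_ H1]. simpl in H1. exact H1. }
  exists (lr, li). intros n Hn. eapply Rle_trans; [apply Cmod_le_sum|].
  specialize (Hlr n Hn). specialize (Hli n Hn). simpl in *.
  assert (0 < INR n)%R by (apply lt_0_INR; lia).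
  replace (2 * A / INR n)%R with (A / INR n + A / INR n)%R by (field; lra).
  apply Rplus_le_compat; auto.
Qed.

Lemma quot_bound (X h L : C) (e : R) : h <> 0 -> (Cmod (X - L * h) <= e * Cmod h)%R -> (Cmod (X / h - L) <= e)%R.
Proof.
  intros Hh H. assert (Hp : (0 < Cmod h)%R) by (apply (proj1 (Cmod_gt_0 _)); auto).
  replace (X / h - L) with ((X - L * h) / h) by (field; auto).
  rewrite Cmod_div by auto. apply Rmult_le_reg_r with (Cmod h); auto.
  unfold Rdiv. rewrite Rmult_assoc, Rinv_l, Rmult_1_r by lra. exact H.
Qed.

Lemma quot_bound_rev (X h L : C) (e : R) : h <> 0 -> (Cmod (X / h - L) <= e)%R -> (Cmod (X - L * h) <= e * Cmod h)%R.
Proof.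
  intros Hh H.
  replace (X - L * h) with ((X / h - L) * h) by (field; auto).
  rewrite Cmod_mult. apply Rmult_le_compat_r; auto using Cmod_ge_0.
Qed.

Open Scope C_scope.

Lemma Gamma_hd z0 : Dset z0 -> exists L, hd CGamma z0 L.
Proof.
  intros Hz0.
  destruct (Dset_open z0 Hz0) as [dl [Hdl HD]].
  set (Rr := (Cmod z0 + 1)%R).
  destruct (sig_est Rr ltac:(unfold Rr; pose proof (Cmod_ge_0 z0); lra)) as [K [M0 [HK [HM0 Hs]]]].
  set (F := fun n w => gauss_seq w n).
  assert (HBw : forall w, (Cmod (w - z0) < Rmin dl 1)%R -> Dset w /\ (Cmod w <= Rr)%R).
  { intros w Hw. split. apply HD. eapply Rlt_le_trans; [exact Hw|apply Rmin_l].
    pose proof (Cmod_sub_tri w z0). pose proof (Rmin_r dl 1). unfold Rr. lra. }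
  assert (Hz0R : (Cmod z0 <= Rr)%R) by (unfold Rr; lra).
  destruct (prod_conv (fun n => F n z0) (fun m => sig m z0) K M0 HK HM0) as [lz [Az [_ [Hgz _]]]].
  { intros m Hm. destruct (Hs m Hm) as [Hk Hs']. destruct (Hs' z0 z0 Hz0R Hz0R) as [H1 _].
    split; [|split; auto]. unfold F. rewrite gauss_S by auto. unfold sig. ring. }
  set (Mz := (Cmod (F M0 z0) * exp K)%R) in *.
  assert (HMz : (0 <= Mz)%R) by (unfold Mz; apply Rmult_le_pos; [apply Cmod_ge_0 | left; apply exp_pos]).
  destruct (hd_gauss z0 Hz0 M0) as [LM HLM].
  destruct (HLM 1%R ltac:(lra)) as [eta1 [Heta1 HLM1]].
  set (eta := Rmin (Rmin dl 1) eta1).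
  assert (Heta : (0 < eta)%R) by (unfold eta; repeat apply Rmin_pos; lra).
  set (Q := fun n w => (F n w - F n z0) / (w - z0)).
  set (Gq := fun w => (CGamma w - CGamma z0) / (w - z0)).
  set (Qb := ((Cmod LM + 1 + Mz * K) * exp K)%R).
  assert (HQb : (0 <= Qb)%R) by (unfold Qb; apply Rmult_le_pos; [pose proof (Cmod_ge_0 LM); pose proof (Rmult_le_pos _ _ HMz HK); lra | left; apply exp_pos]).
  set (Bq := (2 * ((Qb + Mz) * K))%R).
  assert (Hstar : forall w, w <> z0 -> (Cmod (w - z0) < eta)%R ->
     forall n, (M0 <= n)%nat -> (Cmod (Gq w - Q n w) <= Bq / INR n)%R).
  { intros w Hwz Hw.
    assert (Hw1 : (Cmod (w - z0) < Rmin dl 1)%R) by (eapply Rlt_le_trans; [exact Hw|apply Rmin_l]).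
    destruct (HBw w Hw1) as [HDw HwR].
    assert (Hh : w - z0 <> 0) by (intros E; apply Hwz, Cminus_eq0, E).
    assert (HQM0 : (Cmod (Q M0 w) <= Cmod LM + 1)%R).
    { assert (Cmod (Q M0 w - LM) <= 1)%R.
      { apply quot_bound; auto. apply HLM1. eapply Rlt_le_trans; [exact Hw|apply Rmin_r]. }
      pose proof (Cmod_sub_tri (Q M0 w) LM). lra. }
    assert (Hrec : forall m, (M0 <= m)%nat ->
      Q (S m) w = Q m w * (1 + sig m w) + F m z0 * ((sig m w - sig m z0) / (w - z0))).
    { intros m Hm. unfold Q, F. rewrite !gauss_S by auto. unfold sig. field. auto. }
    assert (Hsd : forall m, (M0 <= m)%nat -> (Cmod ((sig m w - sig m z0) / (w - z0)) <= K * cm m)%R).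
    { intros m Hm. destruct (Hs m Hm) as [_ Hs']. destruct (Hs' w z0 HwR Hz0R) as [_ H2].
      rewrite Cmod_div by auto. apply Rmult_le_reg_r with (Cmod (w - z0)).
      apply (proj1 (Cmod_gt_0 _)); auto.
      unfold Rdiv. rewrite Rmult_assoc, Rinv_l, Rmult_1_r. exact H2.
      apply Rgt_not_eq, (proj1 (Cmod_gt_0 _)); auto. }
    assert (Hgr : forall n, (M0 <= n)%nat -> (Cmod (Q n w) <= Qb)%R).
    { intros n Hn.
      pose proof (growth (fun n => Cmod (Q n w)) K (Mz * K) M0 HM0 HK ltac:(nra) (Cmod_ge_0 _)) as G.
      eapply Rle_trans. apply G; auto.
      - intros m Hm. rewrite Hrec by auto. eapply Rle_trans; [apply Cmod_triangle|]. rewrite !Cmod_mult.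
        destruct (Hs m Hm) as [_ Hs']. destruct (Hs' w w HwR HwR) as [Hsw _].
        apply Rplus_le_compat.
        + apply Rmult_le_compat_l; auto using Cmod_ge_0. eapply Rle_trans; [apply Cmod_triangle|]. rewrite Cmod_1. lra.
        + rewrite Rmult_assoc. apply Rmult_le_compat; auto using Cmod_ge_0.
      - unfold Qb. apply Rmult_le_compat_r. left; apply exp_pos. lra. }
    destruct (conv_tail (fun n => Q n w) M0 ((Qb + Mz) * K) ltac:(nra) HM0) as [lw Hlw].
    { intros m Hm. rewrite Hrec by auto.
      replace (Q m w * (1 + sig m w) + F m z0 * ((sig m w - sig m z0) / (w - z0)) - Q m w)
        with (Q m w * sig m w + F m z0 * ((sig m w - sig m z0) / (w - z0))) by ring.
      eapply Rle_trans; [apply Cmod_triangle|]. rewrite !Cmod_mult.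
      destruct (Hs m Hm) as [_ Hs']. destruct (Hs' w w HwR HwR) as [Hsw _].
      assert (Cmod (Q m w) * Cmod (sig m w) <= Qb * (K * cm m))%R by (apply Rmult_le_compat; auto using Cmod_ge_0).
      assert (Cmod (F m z0) * Cmod ((sig m w - sig m z0) / (w - z0)) <= Mz * (K * cm m))%R
        by (apply Rmult_le_compat; auto using Cmod_ge_0; apply Hgz; auto).
      lra. }
    assert (Elw : lw = Gq w).
    { destruct (Gamma_conv w HDw) as [Nw [Aw [HNw [HAw _]]]].
      destruct (Gamma_conv z0 Hz0) as [Nz [Az' [HNz [HAz _]]]].
      apply Cminus_eq0.
      replace (lw - Gq w) with ((lw * (w - z0) - (CGamma w - CGamma z0)) / (w - z0)) by (unfold Gq; field; auto).
      replace (lw * (w - z0) - (CGamma w - CGamma z0)) with (RtoC 0). unfold Cdiv. ring.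
      symmetry. apply (zero_of_bound _ (max M0 (max Nw Nz)) (2 * ((Qb + Mz) * K) * Cmod (w - z0) + Aw + Az')).
      intros n Hn. specialize (Hlw n ltac:(lia)). specialize (HAw n ltac:(lia)). specialize (HAz n ltac:(lia)).
      assert (0 < INR n)%R by (apply lt_0_INR; lia).
      replace (lw * (w - z0) - (CGamma w - CGamma z0)) with
        ((lw - Q n w) * (w - z0) - (CGamma w - F n w) + (CGamma z0 - F n z0)) by (unfold Q; field; auto).
      eapply Rle_trans; [apply Cmod_triangle|]. eapply Rle_trans; [apply Rplus_le_compat_r|].
      { replace ((lw - Q n w) * (w - z0) - (CGamma w - F n w)) with ((lw - Q n w) * (w - z0) + - (CGamma w - F n w)) by ring.
        apply Cmod_triangle. }
      rewrite Cmod_opp, Cmod_mult. unfold F in *.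
      assert (Cmod (lw - Q n w) * Cmod (w - z0) <= 2 * ((Qb + Mz) * K) / INR n * Cmod (w - z0))%R
        by (apply Rmult_le_compat_r; auto using Cmod_ge_0).
      replace ((2 * ((Qb + Mz) * K) * Cmod (w - z0) + Aw + Az') / INR n)%R with
        (2 * ((Qb + Mz) * K) / INR n * Cmod (w - z0) + Aw / INR n + Az' / INR n)%R by (field; lra).
      lra. }
    intros n Hn. rewrite <- Elw. apply Hlw; auto. }
  set (Lf := fun n => epsilon (inhabits (RtoC 0)) (fun L => hd (F n) z0 L)).
  assert (HLf : forall n, hd (F n) z0 (Lf n)).
  { intros n. unfold Lf. apply epsilon_spec. apply (hd_gauss z0 Hz0 n). }
  assert (HQL : forall n e, (0 < e)%R -> exists et, (0 < et)%R /\ forall w, w <> z0 -> (Cmod (w - z0) < et)%R ->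
     (Cmod (Q n w - Lf n) <= e)%R).
  { intros n e He. destruct (HLf n e He) as [et [Het Hw]]. exists et. split; auto.
    intros w Hwz Hw'. apply quot_bound. intros E; apply Hwz, Cminus_eq0, E. apply Hw; auto. }
  destruct (cauchy_C Lf M0 Bq HM0) as [L HL].
  { intros n m Hn Hm. apply le_epsilon. intros e He.
    destruct (HQL n (e/2)%R ltac:(lra)) as [e1 [He1 H1]].
    destruct (HQL m (e/2)%R ltac:(lra)) as [e2 [He2 H2]].
    destruct (small_pos_point z0 (Rmin eta (Rmin e1 e2)) ltac:(repeat apply Rmin_pos; lra)) as [w [Hwz Hw]].
    assert (Hwe : (Cmod (w - z0) < eta)%R) by (eapply Rlt_le_trans; [exact Hw|apply Rmin_l]).
    assert (Hw1 : (Cmod (w - z0) < e1)%R) by (eapply Rlt_le_trans; [exact Hw|]; eapply Rle_trans; [apply Rmin_r|apply Rmin_l]).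
    assert (Hw2 : (Cmod (w - z0) < e2)%R) by (eapply Rlt_le_trans; [exact Hw|]; eapply Rle_trans; [apply Rmin_r|apply Rmin_r]).
    specialize (H1 w Hwz Hw1). specialize (H2 w Hwz Hw2).
    pose proof (Hstar w Hwz Hwe n Hn). pose proof (Hstar w Hwz Hwe m Hm).
    replace (Lf n - Lf m) with (- (Q n w - Lf n) + - (Gq w - Q n w) + (Gq w - Q m w) + (Q m w - Lf m)) by ring.
    pose proof (Cmod_triangle (- (Q n w - Lf n) + - (Gq w - Q n w) + (Gq w - Q m w)) (Q m w - Lf m)).
    pose proof (Cmod_triangle (- (Q n w - Lf n) + - (Gq w - Q n w)) (Gq w - Q m w)).
    pose proof (Cmod_triangle (- (Q n w - Lf n)) (- (Gq w - Q n w))). rewrite !Cmod_opp in *.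
    lra. }
  exists L. intros e He.
  destruct (small_tail (3 * Bq) (e / 2) M0 ltac:(lra) HM0) as [n [Hn1 Hn2]].
  specialize (Hn2 n (le_n n)).
  destruct (HQL n (e / 2)%R ltac:(lra)) as [et [Het Hq]].
  exists (Rmin eta et). split. apply Rmin_pos; auto.
  intros w Hw. destruct (Ceq_dec w z0) as [->|Hwz].
  { replace (CGamma z0 - CGamma z0 - L * (z0 - z0)) with (RtoC 0) by ring. rewrite Cmod_0.
    pose proof (Cmod_ge_0 (z0 - z0)). nra. }
  assert (Hh : w - z0 <> 0) by (intros E; apply Hwz, Cminus_eq0, E).
  apply quot_bound_rev; auto.
  pose proof (Hstar w Hwz (Rlt_le_trans _ _ _ Hw (Rmin_l _ _)) n Hn1).
  pose proof (Hq w Hwz (Rlt_le_trans _ _ _ Hw (Rmin_r _ _))).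
  pose proof (HL n Hn1).
  change ((CGamma w - CGamma z0) / (w - z0)) with (Gq w).
  replace (Gq w - L) with ((Gq w - Q n w) + (Q n w - Lf n) + - (L - Lf n)) by ring.
  eapply Rle_trans; [apply Cmod_triangle|]. rewrite Cmod_opp.
  eapply Rle_trans; [apply Rplus_le_compat_r, Cmod_triangle|].
  assert (0 < INR n)%R by (apply lt_0_INR; lia).
  replace (3 * Bq / INR n)%R with (Bq / INR n + 2 * Bq / INR n)%R in Hn2 by (field; lra).
  lra.
Qed.

Open Scope C_scope.

Lemma CGamma'_eq z L : hd CGamma z L -> CGamma' z = L.
Proof.
  intros H. pose proof (hd_is_derive _ _ _ H) as H1. unfold CGamma'.
  set (P := fun l : C => is_derive (K := C_AbsRing) (V := C_NormedModule) CGamma z l).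
  assert (Hs : P (epsilon (inhabits (RtoC 0)) P)) by (apply epsilon_spec; exists L; exact H1).
  pose proof (is_C_derive_unique _ _ _ Hs) as E1. pose proof (is_C_derive_unique _ _ _ H1) as E2.
  rewrite <- E1, E2. reflexivity.
Qed.

Lemma Dset_neq0 z : Dset z -> z <> 0.
Proof. intros H E. apply (H 0%nat). rewrite E. simpl. apply injective_projections; simpl; ring. Qed.

Lemma digamma_succ z : Dset z -> digamma (z + 1) = digamma z + / z.
Proof.
  intros Hz. destruct (Gamma_hd z Hz) as [L HL].
  destruct (Gamma_hd (z + 1) (Dset_S z Hz)) as [L1 HL1].
  destruct (Dset_open z Hz) as [d [Hd HD]].
  assert (HA : hd (fun w => CGamma (1 * w + 1)) z (1 * L1)).
  { apply hd_affine. apply RtoC_neq0; lra. replace (1 * z + 1) with (z + 1) by ring. exact HL1. }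
  assert (HB : hd (fun w => w * CGamma w) z (1 * CGamma z + z * L)) by (apply hd_mult; auto; apply hd_id).
  assert (HA' : hd (fun w => w * CGamma w) z (1 * L1)).
  { eapply hd_ext; [|exact HA]. exists d. split; auto. intros w Hw.
    replace (1 * w + 1) with (w + 1) by ring. apply Gamma_succ, HD, Hw. }
  pose proof (hd_unique _ _ _ _ HA' HB) as E.
  unfold digamma. rewrite (CGamma'_eq _ _ HL), (CGamma'_eq _ _ HL1), Gamma_succ by auto.
  destruct (Gamma_conv z Hz) as [N0 [A0 [_ [_ Hg]]]]. pose proof (Dset_neq0 z Hz).
  replace L1 with (CGamma z + z * L) by (rewrite <- (Cmult_1_l L1), E; ring).
  field. split; auto.
Qed.

Fixpoint sumC (f : nat -> C) (n : nat) : C :=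
  match n with 0 => 0 | S n => sumC f n + f n end.

Lemma digamma_shift z k : Dset z -> digamma (z + RtoC (INR k)) = digamma z + sumC (fun i => / (z + RtoC (INR i))) k.
Proof.
  intros Hz. induction k.
  - simpl. replace (z + RtoC 0) with z by (apply injective_projections; simpl; ring). ring.
  - simpl sumC. replace (z + RtoC (INR (S k))) with ((z + RtoC (INR k)) + 1)
      by (rewrite S_INR; apply injective_projections; simpl; ring).
    rewrite digamma_succ by (apply Dset_plus; auto). rewrite IHk. ring.
Qed.

Open Scope C_scope.

Lemma sumC_ext f g n : (forall j, (j < n)%nat -> f j = g j) -> sumC f n = sumC g n.
Proof. induction n; intros H; simpl; auto. rewrite IHn, H; auto. Qed.

Lemma sumC_plus f g n : sumC (fun j => f j + g j) n = sumC f n + sumC g n.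
Proof. induction n; simpl. ring. rewrite IHn. ring. Qed.

Lemma sumC_minus f g n : sumC (fun j => f j - g j) n = sumC f n - sumC g n.
Proof. induction n; simpl. ring. rewrite IHn. ring. Qed.

Lemma sumC_scal c f n : sumC (fun j => c * f j) n = c * sumC f n.
Proof. induction n; simpl. ring. rewrite IHn. ring. Qed.

Lemma sumC_zero n : sumC (fun _ => 0) n = 0.
Proof. induction n; simpl. auto. rewrite IHn. ring. Qed.

Lemma sumC_shift0 f n : sumC f (S n) = f 0%nat + sumC (fun i => f (S i)) n.
Proof. induction n; simpl. ring. simpl in IHn. rewrite IHn. ring. Qed.

Lemma sumC_swap (a : nat -> nat -> C) m n :
  sumC (fun i => sumC (fun j => a i j) n) m = sumC (fun j => sumC (fun i => a i j) m) n.
Proof.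
  induction m; simpl.
  - rewrite sumC_zero. auto.
  - rewrite IHm. rewrite <- sumC_plus. auto.
Qed.

Lemma sumC_pred g n : sumC (fun j => match j with 0%nat => 0 | S j' => g j' end) (S n) = sumC g n.
Proof. rewrite sumC_shift0. simpl. rewrite Cplus_0_l. auto. Qed.

Fixpoint ecoef (k j : nat) : C :=
  match k with
  | 0%nat => match j with 0%nat => 1 | _ => 0 end
  | S k => ecoef k j - match j with 0%nat => 0 | S j' => ecoef k j' end
  end.

Lemma ecoef_big k j : (k < j)%nat -> ecoef k j = 0.
Proof.
  revert j. induction k; intros j Hj; simpl.
  - destruct j. lia. auto.
  - destruct j. lia. rewrite IHk, IHk by lia. ring.
Qed.

Lemma shift_sum (X : nat -> C) k n : (k < n)%nat ->
  sumC (fun j => ecoef (S k) j * X j) (S n) =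
  sumC (fun j => ecoef k j * X j) (S n) - sumC (fun j => ecoef k j * X (S j)) (S n).
Proof.
  intros Hk. simpl ecoef.
  rewrite (sumC_ext _ (fun j => ecoef k j * X j - (match j with 0%nat => 0 | S j' => ecoef k j' * X (S j') end)))
    by (intros j _; destruct j; ring).
  rewrite sumC_minus, sumC_pred. f_equal.
  simpl sumC at 2. rewrite ecoef_big by lia. ring.
Qed.

Lemma poch_S_shift a j : poch a (S j) = a * poch (a + 1) j.
Proof.
  induction j.
  - simpl. apply injective_projections; simpl; ring.
  - change (poch a (S (S j))) with (poch a (S j) * (a + RtoC (INR (S j)))).
    change (poch (a + 1) (S j)) with (poch (a + 1) j * (a + 1 + RtoC (INR j))).
    rewrite IHj, S_INR, RtoC_plus. ring.
Qed.

Lemma poch_neq0 a k : Dset a -> poch a k <> 0.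
Proof. intros H. induction k; simpl. apply RtoC_neq0; lra. apply Cmult_neq_0; auto. Qed.

Definition xw (a c : C) (j : nat) : C := poch a j / poch c j.

Lemma xw_S a c j : Dset c -> xw a c (S j) = a / c * xw (a + 1) (c + 1) j.
Proof.
  intros Hc. unfold xw. rewrite !poch_S_shift.
  pose proof (poch_neq0 (c + 1) j (Dset_S c Hc)). pose proof (Dset_neq0 c Hc).
  field. split; auto.
Qed.

Lemma claim1 k : forall a c N, Dset c -> (k <= N)%nat ->
  sumC (fun j => ecoef k j * xw a c j) (S N) = poch (c - a) k / poch c k.
Proof.
  induction k; intros a c N Hc Hk.
  - rewrite sumC_shift0. simpl ecoef.
    rewrite (sumC_ext _ (fun _ => 0)) by (intros j _; ring).
    rewrite sumC_zero. unfold xw. simpl. field.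
  - rewrite shift_sum by lia.
    rewrite (sumC_ext (fun j => ecoef k j * xw a c (S j)) (fun j => a / c * (ecoef k j * xw (a + 1) (c + 1) j)))
      by (intros j _; rewrite xw_S by auto; ring).
    rewrite sumC_scal, IHk, IHk by (auto using Dset_S; lia).
    replace (c + 1 - (a + 1)) with (c - a) by ring.
    pose proof (poch_neq0 c k Hc). pose proof (Dset_neq0 c Hc). pose proof (Hc k).
    pose proof (poch_S_shift c k) as E. simpl poch in E.
    assert (Ec : poch (c + 1) k = poch c k * (c + RtoC (INR k)) / c) by (rewrite E; field; auto).
    rewrite Ec. simpl poch. field. repeat split; auto.
Qed.

Definition hsum (a : C) (j : nat) : C := sumC (fun i => / (a + RtoC (INR i))) j.

Lemma hsum_S a j : hsum a (S j) = / a + hsum (a + 1) j.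
Proof.
  unfold hsum. rewrite sumC_shift0. f_equal.
  - simpl. f_equal. apply injective_projections; simpl; ring.
  - apply sumC_ext. intros i _. f_equal. rewrite S_INR, RtoC_plus. ring.
Qed.

Lemma claim2 k : forall a c N, Dset c -> Dset a -> Dset (c - a) -> (k <= N)%nat ->
  sumC (fun j => ecoef k j * (xw a c j * hsum a j)) (S N) = - (poch (c - a) k / poch c k) * hsum (c - a) k.
Proof.
  induction k; intros a c N Hc Ha Hca Hk.
  - rewrite sumC_shift0. simpl ecoef.
    rewrite (sumC_ext _ (fun _ => 0)) by (intros j _; ring).
    rewrite sumC_zero. unfold xw, hsum. simpl. ring.
  - rewrite shift_sum by lia.
    rewrite (sumC_ext (fun j => ecoef k j * (xw a c (S j) * hsum a (S j)))
      (fun j => / c * (ecoef k j * xw (a + 1) (c + 1) j) + a / c * (ecoef k j * (xw (a + 1) (c + 1) j * hsum (a + 1) j)))).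
    2:{ intros j _. rewrite xw_S, hsum_S by auto. field. split; [apply Dset_neq0; auto | apply Dset_neq0; auto]. }
    assert (Hca' : Dset (c + 1 - (a + 1))) by (replace (c + 1 - (a + 1)) with (c - a) by ring; auto).
    rewrite sumC_plus, !sumC_scal, IHk, claim1, IHk by (auto using Dset_S; lia).
    replace (c + 1 - (a + 1)) with (c - a) by ring.
    pose proof (poch_neq0 c k Hc). pose proof (Dset_neq0 c Hc). pose proof (Hc k).
    pose proof (poch_S_shift c k) as E. simpl poch in E.
    assert (Ec : poch (c + 1) k = poch c k * (c + RtoC (INR k)) / c) by (rewrite E; field; auto).
    rewrite Ec. simpl poch. unfold hsum. simpl sumC. fold (hsum (c - a) k).
    pose proof (Hca k). field. repeat split; auto.
Qed.

Open Scope C_scope.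

Ltac cring := match goal with |- ?a = ?b => change (@eq C a b) end; ring.

Lemma pow_n_S (t : C) j : @pow_n C_Ring t (S j) = t * @pow_n C_Ring t j.
Proof. reflexivity. Qed.

Lemma pow_n_0 (t : C) : @pow_n C_Ring t 0 = RtoC 1.
Proof. reflexivity. Qed.

Lemma pow_expand k : forall N t, (k <= N)%nat ->
  pow_n (RtoC 1 - t) k = sumC (fun j => ecoef k j * pow_n t j) (S N).
Proof.
  induction k; intros N t Hk.
  - rewrite sumC_shift0. simpl ecoef. rewrite (sumC_ext _ (fun _ => 0)) by (intros j _; ring).
    rewrite sumC_zero, !pow_n_0. change (@eq C (RtoC 1) (RtoC 1 * RtoC 1 + RtoC 0)). ring.
  - rewrite pow_n_S, shift_sum by lia.
    rewrite (sumC_ext (fun j => ecoef k j * pow_n t (S j)) (fun j => t * (ecoef k j * pow_n t j)))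
      by (intros j _; rewrite pow_n_S; ring).
    rewrite sumC_scal, <- IHk by lia. cring.
Qed.

Lemma Cmod_pow_n (t : C) j : Cmod (pow_n t j) = (Cmod t ^ j)%R.
Proof. induction j. rewrite pow_n_0, Cmod_1. simpl. auto. rewrite pow_n_S, Cmod_mult, IHj. simpl. ring. Qed.

Fixpoint sumR (f : nat -> R) (n : nat) : R :=
  match n with 0%nat => 0%R | S n => (sumR f n + f n)%R end.

Lemma pow_le1 (x : R) n : (0 <= x)%R -> (x <= 1)%R -> (x ^ n <= 1)%R.
Proof. intros H0 H1. induction n; simpl. lra. pose proof (pow_le x n H0). nra. Qed.

Lemma Cmod_poly_le (d : nat -> C) (t : C) n : (Cmod t <= 1)%R ->
  (Cmod (sumC (fun j => (d j * pow_n t j)%C) n) <= sumR (fun j => Cmod (d j)) n)%R.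
Proof.
  intros Ht. induction n; simpl.
  - rewrite Cmod_0. lra.
  - eapply Rle_trans; [apply Cmod_triangle|]. apply Rplus_le_compat; auto.
    rewrite Cmod_mult, Cmod_pow_n. pose proof (Cmod_ge_0 (d n)). pose proof (Cmod_ge_0 t).
    assert (Cmod t ^ n <= 1)%R.
    { apply pow_le1; auto using Cmod_ge_0. }
    nra.
Qed.

Lemma poly_zero N : forall (d : nat -> C), (forall t : C, t <> 0 -> sumC (fun j => d j * pow_n t j) (S N) = 0) ->
  forall j, (j <= N)%nat -> d j = 0.
Proof.
  induction N; intros d H j Hj.
  - assert (j = 0%nat) by lia. subst j. specialize (H (RtoC 1) (RtoC_neq0 1 ltac:(lra))).
    simpl in H. change (@one C_Ring) with (RtoC 1) in H. rewrite <- H. ring.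
  - assert (Hd0 : d 0%nat = 0).
    { apply (zero_of_bound _ 1 (sumR (fun j => Cmod (d (S j))) (S N))).
      intros n Hn. assert (Hn0 : (0 < INR n)%R) by (apply lt_0_INR; lia).
      set (t := RtoC (/ INR n)).
      assert (Ht0 : t <> 0) by (apply RtoC_neq0; apply Rinv_neq_0_compat; lra).
      assert (Htm : Cmod t = (/ INR n)%R) by (unfold t; rewrite Cmod_RtoC_pos; auto; left; apply Rinv_0_lt_compat; auto).
      assert (Ht1 : (Cmod t <= 1)%R).
      { rewrite Htm. assert (1 <= INR n)%R by (apply (le_INR 1); lia). rewrite <- Rinv_1. apply Rinv_le_contravar; lra. }
      specialize (H t Ht0). rewrite sumC_shift0, pow_n_0 in H.
      rewrite (sumC_ext _ (fun i => t * (d (S i) * pow_n t i))) in H by (intros i _; rewrite pow_n_S; ring).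
      rewrite sumC_scal in H.
      replace (d 0%nat) with (- (t * sumC (fun i => d (S i) * pow_n t i) (S N))).
      2:{ symmetry. replace (d 0%nat) with (d 0%nat * RtoC 1 + t * sumC (fun i => d (S i) * pow_n t i) (S N) - t * sumC (fun i => d (S i) * pow_n t i) (S N)) by ring. rewrite H. ring. }
      rewrite Cmod_opp, Cmod_mult, Htm. pose proof (Cmod_poly_le (fun i => d (S i)) t (S N) Ht1).
      unfold Rdiv. rewrite Rmult_comm. apply Rmult_le_compat_r; auto. left; apply Rinv_0_lt_compat; auto. }
    destruct j. auto.
    apply (IHN (fun i => d (S i))); [|lia].
    intros t Ht. specialize (H t Ht). rewrite sumC_shift0, Hd0 in H.
    rewrite (sumC_ext _ (fun i => t * (d (S i) * pow_n t i))) in H by (intros i _; rewrite pow_n_S; ring).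
    rewrite sumC_scal in H.
    replace (sumC (fun i => d (S i) * pow_n t i) (S N)) with (/ t * (0 * pow_n t 0 + t * sumC (fun i => d (S i) * pow_n t i) (S N))) by (field; auto).
    rewrite H. ring.
Qed.

Open Scope C_scope.

Definition ind (l u : nat) (h : nat -> C) (k : nat) : C :=
  if andb (Nat.leb l k) (Nat.leb k u) then h k else 0.

Lemma sum_n_m_sumC (h : nat -> C) l u : sum_n_m h l u = sumC (ind l u h) (S u).
Proof.
  induction u.
  - destruct l.
    + rewrite sum_n_n. simpl. unfold ind. simpl. change (@eq C (h 0%nat) (0 + h 0%nat)). ring.
    + rewrite sum_n_m_zero by lia. simpl. unfold ind. simpl. change (@eq C (RtoC 0) (0 + 0)). ring.
  - destruct (Nat.le_gt_cases l (S u)) as [Hl|Hl].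
    + rewrite sum_n_Sm by lia. rewrite IHu. change (sumC (ind l (S u) h) (S (S u))) with
        (sumC (ind l (S u) h) (S u) + ind l (S u) h (S u)).
      unfold ind at 3. rewrite (proj2 (Nat.leb_le l (S u)) Hl), Nat.leb_refl. simpl andb.
      change (@eq C (Cplus (sumC (ind l u h) (S u)) (h (S u))) (sumC (ind l (S u) h) (S u) + h (S u))).
      f_equal. apply sumC_ext. intros j Hj. unfold ind.
      rewrite (proj2 (Nat.leb_le j u)) by lia. rewrite (proj2 (Nat.leb_le j (S u))) by lia. reflexivity.
    + rewrite sum_n_m_zero by lia. rewrite (sumC_ext _ (fun _ => 0)). rewrite sumC_zero. reflexivity.
      intros j Hj. unfold ind. rewrite (proj2 (Nat.leb_gt l j)) by lia. reflexivity.
Qed.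

Lemma sumC_extend (g : nat -> C) u N : (u <= N)%nat -> (forall k, (u < k)%nat -> g k = 0) -> sumC g (S N) = sumC g (S u).
Proof.
  intros H Hz. induction H. auto. change (sumC g (S (S m))) with (sumC g (S m) + g (S m)).
  rewrite IHle, Hz by lia. ring.
Qed.

Lemma sum_conv (h w : nat -> C) (a : nat -> C) l u N : (u <= N)%nat -> (forall k, h k = a k * w k) ->
  sum_n_m h l u = sumC (fun k => ind l u a k * w k) (S N).
Proof.
  intros HN Hh. rewrite sum_n_m_sumC. rewrite (sumC_extend (fun k => ind l u a k * w k) u N HN).
  - apply sumC_ext. intros k _. unfold ind. destruct (andb _ _). apply Hh. ring.
  - intros k Hk. unfold ind. rewrite (proj2 (Nat.leb_gt k u) Hk). destruct (Nat.leb l k); simpl; ring.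
Qed.

Lemma notneg_Dset1 z : ~ is_negint z -> Dset (z + 1).
Proof.
  intros Hz j E. apply Hz. exists j. apply Cminus_eq0. rewrite <- E.
  rewrite S_INR. apply injective_projections; simpl; ring.
Qed.

Lemma notneg_Dset z : ~ is_negint z -> z <> 0 -> Dset z.
Proof.
  intros Hz H0 j. destruct j.
  - replace (z + RtoC (INR 0)) with z by (apply injective_projections; simpl; ring). auto.
  - replace (z + RtoC (INR (S j))) with (z + 1 + RtoC (INR j)) by (rewrite S_INR; apply injective_projections; simpl; ring).
    apply notneg_Dset1; auto.
Qed.

Lemma Gamma_neq0 z : Dset z -> CGamma z <> 0.
Proof. intros H. destruct (Gamma_conv z H) as [N0 [A0 [_ [_ Hg]]]]. auto. Qed.

Open Scope C_scope.

Lemma sumC_scal_r c f n : sumC (fun j => f j * c) n = sumC f n * c.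
Proof. induction n; simpl. ring. rewrite IHn. ring. Qed.

Lemma transfer (fe ge : nat -> C) N :
  (forall j, (j <= N)%nat -> sumC (fun k => fe k * ecoef k j) (S N) = ge j) ->
  forall X : nat -> C,
  sumC (fun k => fe k * sumC (fun j => ecoef k j * X j) (S N)) (S N) = sumC (fun j => ge j * X j) (S N).
Proof.
  intros Hc X.
  rewrite (sumC_ext _ (fun k => sumC (fun j => fe k * ecoef k j * X j) (S N))).
  2:{ intros k _. rewrite <- sumC_scal. apply sumC_ext. intros j _. ring. }
  rewrite sumC_swap. apply sumC_ext. intros j Hj. rewrite sumC_scal_r, Hc by lia. reflexivity.
Qed.

Lemma coef_eq (fe ge : nat -> C) N :
  (forall t : C, sumC (fun k => fe k * pow_n (RtoC 1 - t) k) (S N) = sumC (fun j => ge j * pow_n t j) (S N)) ->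
  forall j, (j <= N)%nat -> sumC (fun k => fe k * ecoef k j) (S N) = ge j.
Proof.
  intros H j Hj. apply Cminus_eq0.
  apply (poly_zero N (fun j => sumC (fun k => fe k * ecoef k j) (S N) - ge j)); auto.
  intros t _.
  rewrite (sumC_ext _ (fun j => sumC (fun k => fe k * ecoef k j) (S N) * pow_n t j - ge j * pow_n t j))
    by (intros i _; ring).
  rewrite sumC_minus, <- H.
  rewrite (sumC_ext (fun k => fe k * pow_n (RtoC 1 - t) k) (fun k => fe k * sumC (fun j => ecoef k j * pow_n t j) (S N))).
  2:{ intros k Hk. rewrite (pow_expand k N t) by lia. reflexivity. }
  rewrite transfer with (ge := fun j => sumC (fun k => fe k * ecoef k j) (S N)) by auto. ring.
Qed.

Open Scope C_scope.

Section W.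
Lemma W1 (r s : C) k : Dset s -> Dset (r + 1) -> Dset (r - s + 1) ->
  RtoC 1 / Cbinom (RtoC (INR k) + r) s =
  CGamma (s + 1) * CGamma (r - s + 1) / CGamma (r + 1) * xw (r - s + 1) (r + 1) k.
Proof.
  intros Ds Dr Drs. unfold Cbinom, xw.
  replace (RtoC (INR k) + r + 1) with (r + 1 + RtoC (INR k)) by ring.
  replace (RtoC (INR k) + r - s + 1) with (r - s + 1 + RtoC (INR k)) by ring.
  rewrite !Gamma_poch by auto.
  pose proof (Gamma_neq0 _ Dr). pose proof (Gamma_neq0 _ Drs). pose proof (Gamma_neq0 _ (Dset_S _ Ds)).
  pose proof (poch_neq0 _ k Dr). pose proof (poch_neq0 _ k Drs).
  field. repeat split; auto.
Qed.

Lemma W2 (r s : C) k : Dset s -> Dset (r + 1) -> Dset (r - s + 1) ->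
  s / (r - s + 1) * (RtoC 1 / Cbinom (RtoC (INR k) + r) (r - s + 1)) =
  CGamma (s + 1) * CGamma (r - s + 1) / CGamma (r + 1) * xw s (r + 1) k.
Proof.
  intros Ds Dr Drs. unfold Cbinom, xw.
  replace (RtoC (INR k) + r + 1) with (r + 1 + RtoC (INR k)) by ring.
  replace (RtoC (INR k) + r - (r - s + 1) + 1) with (s + RtoC (INR k)) by ring.
  rewrite !Gamma_poch by auto. rewrite (Gamma_succ (r - s + 1) Drs), (Gamma_succ s Ds).
  pose proof (Gamma_neq0 _ Dr). pose proof (Gamma_neq0 _ Drs). pose proof (Gamma_neq0 _ Ds).
  pose proof (poch_neq0 _ k Dr). pose proof (poch_neq0 _ k Ds).
  pose proof (Dset_neq0 _ Ds). pose proof (Dset_neq0 _ Drs).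
  field. repeat split; auto.
Qed.

Lemma Hm1 (r s : C) k : Dset s -> Dset (r - s + 1) ->
  Harm s - Harm (RtoC (INR k) + r - s) = (digamma s - digamma (r - s + 1)) + / s - hsum (r - s + 1) k.
Proof.
  intros Ds Drs. unfold Harm.
  replace (RtoC (INR k) + r - s + RtoC 1) with (r - s + 1 + RtoC (INR k)) by ring.
  rewrite digamma_shift, digamma_succ by auto. unfold hsum. ring.
Qed.

Lemma Hm2 (r s : C) k : Dset s -> Dset (r - s + 1) ->
  Harm (RtoC (INR k) + s - RtoC 1) - Harm (r - s + RtoC 1) =
  (digamma s - digamma (r - s + 1)) + hsum s k - / (r - s + 1).
Proof.
  intros Ds Drs. unfold Harm.
  replace (RtoC (INR k) + s - RtoC 1 + RtoC 1) with (s + RtoC (INR k)) by ring.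
  replace (r - s + RtoC 1 + RtoC 1) with ((r - s + 1) + 1) by ring.
  rewrite digamma_shift, digamma_succ by auto. unfold hsum. ring.
Qed.
End W.

Open Scope C_scope.

Theorem lemma5 (l1 u1 l2 u2 : nat) (f g : nat -> C)
  (Hpoly : forall t : C,
     sum_n_m (fun k => f k * pow_n (RtoC 1 - t) k) l1 u1
     = sum_n_m (fun k => g k * pow_n t k) l2 u2)
  (r s : C) (Hr : ~ is_negint r) (Hs : ~ is_negint s) (Hs0 : s <> RtoC 0)
  (Hrs : ~ is_negint (r - s)) :
  sum_n_m (fun k => f k * (RtoC 1 / Cbinom (RtoC (INR k) + r) s)) l1 u1
  = sum_n_m (fun k => g k * (s / (r - s + RtoC 1))
                 * (RtoC 1 / Cbinom (RtoC (INR k) + r) (r - s + RtoC 1))) l2 u2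
  /\
  sum_n_m (fun k => f k * ((Harm s - Harm (RtoC (INR k) + r - s))
                             / Cbinom (RtoC (INR k) + r) s)) l1 u1
  = sum_n_m (fun k => g k * ((r + RtoC 1) / ((r - s + RtoC 1) * (r - s + RtoC 1)))
                 * (RtoC 1 / Cbinom (RtoC (INR k) + r) (r - s + RtoC 1))) l2 u2
    + sum_n_m (fun k => g k * (s / (r - s + RtoC 1))
                 * ((Harm (RtoC (INR k) + s - RtoC 1) - Harm (r - s + RtoC 1))
                    / Cbinom (RtoC (INR k) + r) (r - s + RtoC 1))) l2 u2.
Proof.
  assert (Ds : Dset s) by (apply notneg_Dset; auto).
  assert (Dr : Dset (r + 1)) by (apply notneg_Dset1; auto).
  assert (Drs : Dset (r - s + 1)) by (apply notneg_Dset1; auto).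
  assert (Hrs0 : r - s + 1 <> 0) by (apply Dset_neq0; auto).
  set (N := max u1 u2).
  set (fe := ind l1 u1 f). set (ge := ind l2 u2 g).
  assert (Hc : forall j, (j <= N)%nat -> sumC (fun k => fe k * ecoef k j) (S N) = ge j).
  { apply coef_eq. intros t. specialize (Hpoly t).
    rewrite (sum_conv _ (fun k => pow_n (RtoC 1 - t) k) f l1 u1 N) in Hpoly by (unfold N; lia || reflexivity).
    rewrite (sum_conv _ (fun k => pow_n t k) g l2 u2 N) in Hpoly by (unfold N; lia || reflexivity).
    exact Hpoly. }
  pose proof (transfer fe ge N Hc) as T.
  set (K0 := CGamma (s + 1) * CGamma (r - s + 1) / CGamma (r + 1)).
  set (x := xw s (r + 1)).
  set (S1 := sumC (fun j => ge j * x j) (S N)).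
  set (S2 := sumC (fun j => ge j * (x j * hsum s j)) (S N)).
  set (Q := digamma s - digamma (r - s + 1)).
  assert (Ecl1 : forall k, (k <= N)%nat -> xw (r - s + 1) (r + 1) k = sumC (fun j => ecoef k j * x j) (S N)).
  { intros k Hk. unfold x. rewrite claim1 by auto. unfold xw. f_equal. f_equal. ring. }
  assert (Ecl2 : forall k, (k <= N)%nat -> xw (r - s + 1) (r + 1) k * hsum (r - s + 1) k =
      - sumC (fun j => ecoef k j * (x j * hsum s j)) (S N)).
  { intros k Hk. unfold x. rewrite claim2 by (auto; replace (r + 1 - s) with (r - s + 1) by ring; auto).
    replace (r + 1 - s) with (r - s + 1) by ring. unfold xw. ring. }
  split.
  - rewrite (sum_conv _ (fun k => RtoC 1 / Cbinom (RtoC (INR k) + r) s) f l1 u1 N) by (unfold N; lia || reflexivity).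
    rewrite (sum_conv _ (fun k => s / (r - s + RtoC 1) * (RtoC 1 / Cbinom (RtoC (INR k) + r) (r - s + RtoC 1))) g l2 u2 N)
      by (unfold N; lia || (intros; ring)).
    fold fe ge.
    rewrite (sumC_ext _ (fun k => K0 * (fe k * sumC (fun j => ecoef k j * x j) (S N)))).
    2:{ intros k Hk. rewrite W1, Ecl1 by (auto; lia). fold K0. ring. }
    rewrite (sumC_ext (fun k => ge k * _) (fun k => K0 * (ge k * x k))).
    2:{ intros k Hk. replace (r - s + RtoC 1) with (r - s + 1) by reflexivity. rewrite W2 by auto. fold K0. unfold x. ring. }
    rewrite !sumC_scal, T. reflexivity.
  - rewrite (sum_conv _ (fun k => (Harm s - Harm (RtoC (INR k) + r - s)) / Cbinom (RtoC (INR k) + r) s) f l1 u1 N)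
      by (unfold N; lia || reflexivity).
    rewrite (sum_conv _ (fun k => (r + RtoC 1) / ((r - s + RtoC 1) * (r - s + RtoC 1)) * (RtoC 1 / Cbinom (RtoC (INR k) + r) (r - s + RtoC 1))) g l2 u2 N)
      by (unfold N; lia || (intros; ring)).
    rewrite (sum_conv _ (fun k => s / (r - s + RtoC 1) * ((Harm (RtoC (INR k) + s - RtoC 1) - Harm (r - s + RtoC 1))
                    / Cbinom (RtoC (INR k) + r) (r - s + RtoC 1))) g l2 u2 N)
      by (unfold N; lia || (intros; ring)).
    fold fe ge.
    rewrite (sumC_ext _ (fun k => K0 * (Q + / s) * (fe k * sumC (fun j => ecoef k j * x j) (S N))
                                  + K0 * (fe k * sumC (fun j => ecoef k j * (x j * hsum s j)) (S N)))).
    2:{ intros k Hk.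
        replace ((Harm s - Harm (RtoC (INR k) + r - s)) / Cbinom (RtoC (INR k) + r) s)
          with ((Harm s - Harm (RtoC (INR k) + r - s)) * (RtoC 1 / Cbinom (RtoC (INR k) + r) s)) by (unfold Cdiv; ring).
        rewrite Hm1, W1 by auto. fold K0 Q.
        transitivity (fe k * (K0 * (Q + / s) * xw (r - s + 1) (r + 1) k - K0 * (xw (r - s + 1) (r + 1) k * hsum (r - s + 1) k))).
        ring. rewrite (Ecl2 k), (Ecl1 k) by lia. ring. }
    rewrite sumC_plus, !sumC_scal, !T. fold S1 S2.
    assert (EB : forall k, RtoC 1 / Cbinom (RtoC (INR k) + r) (r - s + RtoC 1) = K0 * x k * ((r - s + 1) / s)).
    { intros k. pose proof (W2 r s k Ds Dr Drs) as E. fold K0 in E. unfold x.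
      set (u := RtoC 1 / Cbinom (RtoC (INR k) + r) (r - s + RtoC 1)) in *.
      transitivity (s / (r - s + 1) * u * ((r - s + 1) / s)). field. split; auto.
      rewrite E. reflexivity. }
    rewrite (sumC_ext (fun k => ge k * ((r + RtoC 1) / ((r - s + RtoC 1) * (r - s + RtoC 1)) * _))
      (fun k => K0 * ((r + 1) / ((r - s + 1) * s)) * (ge k * x k))).
    2:{ intros k _. rewrite EB. field. split; auto. }
    rewrite (sumC_ext (fun k => ge k * (s / (r - s + RtoC 1) * _))
      (fun k => K0 * (Q - / (r - s + 1)) * (ge k * x k) + K0 * (ge k * (x k * hsum s k)))).
    2:{ intros k _.
        replace ((Harm (RtoC (INR k) + s - RtoC 1) - Harm (r - s + RtoC 1)) / Cbinom (RtoC (INR k) + r) (r - s + RtoC 1))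
          with ((Harm (RtoC (INR k) + s - RtoC 1) - Harm (r - s + RtoC 1)) * (RtoC 1 / Cbinom (RtoC (INR k) + r) (r - s + RtoC 1)))
          by (unfold Cdiv; ring).
        rewrite Hm2, EB by auto. fold Q. field. split; auto. }
    rewrite sumC_plus, !sumC_scal. fold S1 S2.
    change (@eq C (K0 * (Q + / s) * S1 + K0 * S2) (K0 * ((r + 1) / ((r - s + 1) * s)) * S1 + (K0 * (Q - / (r - s + 1)) * S1 + K0 * S2))). field. split; auto.
Qed.
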